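(* The set $\mathrm{HI}=\{X\in\mathrm{SB}: X\text{ is hereditarily indecomposable}\}$ is coanalytic.
   Context: $\mathrm{SB}$ is the standard Borel space of closed linear subspaces of $C(\Delta)$ ($\Delta$ the Cantor set) with the Effros–Borel structure. An infinite dimensional Banach space is hereditarily indecomposable if none of its closed subspaces is the direct sum of two infinite dimensional closed subspaces. *)

(* Defs.v *)
From Stdlib Require Import Reals.
Open Scope R_scope.

Definition Cantor := nat -> bool.

(** Continuity of f : Delta -> R (product topology; basic opens are cylinders). *)
Definition cont_cantor (f : Cantor -> R) : Prop :=
  forall (x : Cantor) (eps : R), 0 < eps ->
    exists n : nat, forall y : Cantor,
      (forall k, (k < n)%nat -> y k = x k) -> Rabs (f y - f x) < eps.

Definition dist_le (f g : Cantor -> R) (e : R) : Prop :=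
  forall x, Rabs (f x - g x) <= e.

(** A (candidate) subset of C(Delta) is a predicate on functions. *)
Definition fset := (Cantor -> R) -> Prop.

Definition closed_subspace (X : fset) : Prop :=
  (forall f, X f -> cont_cantor f) /\
  X (fun _ => 0) /\
  (forall f g, X f -> X g -> X (fun t => f t + g t)) /\
  (forall (a : R) f, X f -> X (fun t => a * f t)) /\
  (forall f, cont_cantor f ->
     (forall e, 0 < e -> exists g, X g /\ dist_le f g e) -> X f).

Definition SB : fset -> Prop := closed_subspace.

Definition open_CD (U : fset) : Prop :=
  (forall f, U f -> cont_cantor f) /\
  (forall f, U f -> exists e, 0 < e /\
     forall g, cont_cantor g -> dist_le f g e -> U g).

Inductive sigma_gen {T : Type} (G : (T -> Prop) -> Prop) : (T -> Prop) -> Prop :=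
| sg_gen : forall A, G A -> sigma_gen G A
| sg_compl : forall A, sigma_gen G A -> sigma_gen G (fun x => ~ A x)
| sg_cup : forall A : nat -> T -> Prop,
    (forall n, sigma_gen G (A n)) -> sigma_gen G (fun x => exists n, A n x).

Definition effros_gen (A : fset -> Prop) : Prop :=
  exists U, open_CD U /\ forall F, A F <-> exists f, F f /\ U f.

Definition Baire := nat -> nat.
Definition baire_gen (C : Baire -> Prop) : Prop :=
  exists (n : nat) (s : nat -> nat),
    forall y, C y <-> (forall k, (k < n)%nat -> y k = s k).

Definition prod_gen (B : fset * Baire -> Prop) : Prop :=
  exists A C, sigma_gen effros_gen A /\ sigma_gen baire_gen C /\
    forall p, B p <-> (A (fst p) /\ C (snd p)).

Definition analytic_SB (A : fset -> Prop) : Prop :=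
  exists B, sigma_gen prod_gen B /\
    forall X, A X <-> (SB X /\ exists y : Baire, B (X, y)).

Definition coanalytic_SB (A : fset -> Prop) : Prop :=
  (forall X, A X -> SB X) /\ analytic_SB (fun X => SB X /\ ~ A X).

Fixpoint fsum (n : nat) (c : nat -> R) : R :=
  match n with O => 0 | S m => fsum m c + c m end.

Definition lin_indep (n : nat) (v : nat -> Cantor -> R) : Prop :=
  forall c : nat -> R,
    (forall t, fsum n (fun i => c i * v i t) = 0) ->
    forall i, (i < n)%nat -> c i = 0.

Definition infinite_dim (X : fset) : Prop :=
  forall n, exists v : nat -> Cantor -> R,
    (forall i, (i < n)%nat -> X (v i)) /\ lin_indep n v.

Definition decomposable (Y : fset) : Prop :=
  exists Z W, closed_subspace Z /\ closed_subspace W /\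
    infinite_dim Z /\ infinite_dim W /\
    (forall f, Z f -> Y f) /\ (forall f, W f -> Y f) /\
    (forall f, Z f -> W f -> forall t, f t = 0) /\
    (forall y, Y y -> exists z w, Z z /\ W w /\ forall t, y t = z t + w t).

Definition hered_indec (X : fset) : Prop :=
  infinite_dim X /\
  forall Y, closed_subspace Y -> (forall f, Y f -> X f) -> ~ decomposable Y.

Definition HI : fset -> Prop := fun X => SB X /\ hered_indec X.

(* Main.v *)
Require Import Defs.
From Stdlib Require Import Reals Lra Lia List ZArith Classical ClassicalEpsilon FunctionalExtensionality PropExtensionality.
From Stdlib Require Arith.Cantor.
Open Scope R_scope.

Lemma pred_ext {T} (A B : T -> Prop) : (forall x, A x <-> B x) -> A = B.
Proof. intros H; apply functional_extensionality; intro x; apply propositional_extensionality; auto. Qed.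

Lemma sg_ext {T} (G : (T -> Prop) -> Prop) (A B : T -> Prop) :
  sigma_gen G A -> (forall x, A x <-> B x) -> sigma_gen G B.
Proof. intros HA H; rewrite <- (pred_ext _ _ H); exact HA. Qed.

Lemma sg_cap {T} (G : (T -> Prop) -> Prop) (A : nat -> T -> Prop) :
  (forall n, sigma_gen G (A n)) -> sigma_gen G (fun x => forall n, A n x).
Proof.
  intros H.
  apply sg_ext with (A := fun x => ~ (exists n, ~ A n x)).
  - apply sg_compl, sg_cup; intro n; apply sg_compl, H.
  - intro x; split.
    + intros Hn n; apply NNPP; intro Hc; apply Hn; exists n; exact Hc.
    + intros Hn [n Hc]; apply Hc, Hn.
Qed.

Lemma sg_or {T} (G : (T -> Prop) -> Prop) (A B : T -> Prop) :
  sigma_gen G A -> sigma_gen G B -> sigma_gen G (fun x => A x \/ B x).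
Proof.
  intros HA HB.
  apply sg_ext with (A := fun x => exists n, (match n with O => A | _ => B end) x).
  - apply sg_cup; intros [|n]; assumption.
  - intro x; split.
    + intros [[|n] H]; auto.
    + intros [H|H]; [exists O|exists 1%nat]; exact H.
Qed.

Lemma sg_and {T} (G : (T -> Prop) -> Prop) (A B : T -> Prop) :
  sigma_gen G A -> sigma_gen G B -> sigma_gen G (fun x => A x /\ B x).
Proof.
  intros HA HB.
  apply sg_ext with (A := fun x => forall n, (match n with O => A | _ => B end) x).
  - apply sg_cap; intros [|n]; assumption.
  - intro x; split.
    + intros H; split; [apply (H O)|apply (H 1%nat)].
    + intros [H1 H2] [|n]; assumption.
Qed.

Lemma sg_full {T} (G : (T -> Prop) -> Prop) : (exists A, G A) -> sigma_gen G (fun _ => True).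
Proof.
  intros [A HA].
  apply sg_ext with (A := fun x => A x \/ ~ A x).
  - apply sg_or; [apply sg_gen, HA| apply sg_compl, sg_gen, HA].
  - intro x; split; auto. intros _; apply classic.
Qed.

Lemma sg_const {T} (G : (T -> Prop) -> Prop) (P : Prop) : (exists A, G A) -> sigma_gen G (fun _ => P).
Proof.
  intros H. destruct (classic P) as [HP|HP].
  - apply sg_ext with (A := fun _ => True); [apply sg_full, H| tauto].
  - apply sg_ext with (A := fun _ => ~ True); [apply sg_compl, sg_full, H| tauto].
Qed.

Lemma sg_andP {T} (G : (T -> Prop) -> Prop) (P : Prop) (A : T -> Prop) :
  (exists A, G A) -> sigma_gen G A -> sigma_gen G (fun x => P /\ A x).
Proof. intros H HA; apply sg_and; [apply sg_const, H| exact HA]. Qed.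

Lemma sg_exists {T} (G : (T -> Prop) -> Prop) (A : nat -> T -> Prop) :
  (forall n, sigma_gen G (A n)) -> sigma_gen G (fun x => exists n, A n x).
Proof. apply sg_cup. Qed.

Fixpoint dec (j : nat) (i : nat) : nat :=
  match i with O => fst (Cantor.of_nat j) | S i' => dec (snd (Cantor.of_nat j)) i' end.

Lemma dec_surj : forall N (s : nat -> nat), exists j, forall i, (i < N)%nat -> dec j i = s i.
Proof.
  induction N as [|N IH]; intros s.
  - exists O; intros i Hi; lia.
  - destruct (IH (fun i => s (S i))) as [j' Hj'].
    exists (Cantor.to_nat (s O, j')); intros [|i] Hi; cbn [dec]; rewrite Cantor.cancel_of_to; cbn [fst snd]; auto.
    apply Hj'; lia.
Qed.

Definition cyl (n : nat) (s : nat -> nat) (y : Baire) : Prop := forall k, (k < n)%nat -> y k = s k.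

Lemma baire_ex : exists A, baire_gen A.
Proof. exists (fun _ => True). exists O, (fun _ => O). intro y; split; auto. intros _ k Hk; lia. Qed.

Lemma finitary_borel (P : Baire -> Prop) (n : nat) :
  (forall y y', cyl n y y' -> (P y <-> P y')) -> sigma_gen baire_gen P.
Proof.
  intros HP.
  apply sg_ext with (A := fun y => exists j, P (dec j) /\ cyl n (dec j) y).
  - apply sg_cup; intro j; apply sg_andP; [apply baire_ex|].
    apply sg_gen; exists n, (dec j); intro y; unfold cyl; split; intros H k Hk; rewrite H; auto.
  - intro y; split.
    + intros [j [H1 H2]]. apply (HP (dec j)); auto. 
    + intros Hy. destruct (dec_surj n y) as [j Hj]. exists j; split; [|intros k Hk; symmetry; apply Hj; auto].
      apply (HP y); auto.
Qed.

Lemma finitary_list (P : Baire -> Prop) (L : list nat) :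
  (forall y y', (forall m, In m L -> y m = y' m) -> (P y <-> P y')) -> sigma_gen baire_gen P.
Proof.
  intros HP. apply (finitary_borel P (S (list_max L))).
  intros y y' Hc. apply HP. intros m Hm. symmetry. apply Hc.
  assert (list_max L <= list_max L)%nat as H by lia.
  apply list_max_le in H. rewrite Forall_forall in H. specialize (H m Hm). lia.
Qed.

Lemma effros_ex : exists A, effros_gen A.
Proof.
  exists (fun F => exists f, F f /\ False). exists (fun _ => False).
  split; [split; intros f Hf; contradiction|]. intro F; tauto.
Qed.

Lemma prod_ex : exists A, prod_gen A.
Proof.
  destruct effros_ex as [A HA]. destruct baire_ex as [C HC].
  exists (fun p => A (fst p) /\ C (snd p)). exists A, C. repeat split; try (apply sg_gen; assumption); tauto.
Qed.

Lemma prod_rect (A : fset -> Prop) (C : Baire -> Prop) :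
  sigma_gen effros_gen A -> sigma_gen baire_gen C ->
  sigma_gen prod_gen (fun p => A (fst p) /\ C (snd p)).
Proof. intros HA HC. apply sg_gen. exists A, C. repeat split; auto; tauto. Qed.

Lemma prod_left (A : fset -> Prop) :
  sigma_gen effros_gen A -> sigma_gen prod_gen (fun p => A (fst p)).
Proof.
  intros HA. apply sg_ext with (A := fun p => A (fst p) /\ (fun _ => True) (snd p)).
  - apply (prod_rect A (fun _ => True)); auto. apply sg_full, baire_ex.
  - intros; tauto.
Qed.

Lemma prod_right (C : Baire -> Prop) :
  sigma_gen baire_gen C -> sigma_gen prod_gen (fun p => C (snd p)).
Proof.
  intros HC. apply sg_ext with (A := fun p => (fun _ => True) (fst p) /\ C (snd p)).
  - apply (prod_rect (fun _ => True) C); auto. apply sg_full, effros_ex.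
  - intros; tauto.
Qed.

Definition ball (d : Cantor -> R) (r : R) : fset :=
  fun g => cont_cantor g /\ exists r', r' < r /\ dist_le d g r'.

Definition meets (U : fset) (F : fset) : Prop := exists f, F f /\ U f.

Lemma ball_open d r : open_CD (ball d r).
Proof.
  split.
  - intros f [H _]; exact H.
  - intros f [Hf [r' [Hr' Hd]]]. exists ((r - r') / 2). split; [lra|].
    intros g Hg Hfg. split; auto. exists (r' + (r - r')/2). split; [lra|].
    intro x. specialize (Hd x). specialize (Hfg x).
    replace (d x - g x) with ((d x - f x) + (f x - g x)) by ring.
    eapply Rle_trans; [apply Rabs_triang|]. lra.
Qed.

Lemma meets_ball_borel d r : sigma_gen effros_gen (meets (ball d r)).
Proof. apply sg_gen. exists (ball d r). split; [apply ball_open|]. intro F; unfold meets; tauto. Qed.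

Definition zf : Cantor -> R := fun _ => 0.
Definition pt0 : Cantor := fun _ => false.

Lemma dist_le_nonneg f g e : dist_le f g e -> 0 <= e.
Proof. intros H. specialize (H pt0). pose proof (Rabs_pos (f pt0 - g pt0)). lra. Qed.

Lemma dist_le_sym f g e : dist_le f g e -> dist_le g f e.
Proof. intros H x. rewrite Rabs_minus_sym. apply H. Qed.

Lemma dist_le_tri f g h e1 e2 : dist_le f g e1 -> dist_le g h e2 -> dist_le f h (e1 + e2).
Proof.
  intros H1 H2 x. replace (f x - h x) with ((f x - g x) + (g x - h x)) by ring.
  eapply Rle_trans; [apply Rabs_triang|]. specialize (H1 x); specialize (H2 x); lra.
Qed.

Lemma dist_le_mono f g e1 e2 : dist_le f g e1 -> e1 <= e2 -> dist_le f g e2.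
Proof. intros H He x. specialize (H x). lra. Qed.

Lemma dist_le_refl f : dist_le f f 0.
Proof. intro x. rewrite Rminus_diag, Rabs_R0. lra. Qed.

Lemma dist_le_zf f e : dist_le f zf e <-> forall x, Rabs (f x) <= e.
Proof. unfold dist_le, zf. split; intros H x; specialize (H x); rewrite Rminus_0_r in *; auto. Qed.

Lemma dist_le_ext f f' g g' e : (forall x, f x = f' x) -> (forall x, g x = g' x) ->
  dist_le f g e -> dist_le f' g' e.
Proof. intros H1 H2 H x. rewrite <- H1, <- H2. apply H. Qed.

Lemma dist_le_diff f g e : dist_le f g e <-> dist_le (fun t => f t - g t) zf e.
Proof. rewrite dist_le_zf. unfold dist_le. tauto. Qed.

Lemma dist_le_plus f g f' g' e1 e2 : dist_le f f' e1 -> dist_le g g' e2 ->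
  dist_le (fun t => f t + g t) (fun t => f' t + g' t) (e1 + e2).
Proof.
  intros H1 H2 x. replace (f x + g x - (f' x + g' x)) with ((f x - f' x) + (g x - g' x)) by ring.
  eapply Rle_trans; [apply Rabs_triang|]. specialize (H1 x); specialize (H2 x); lra.
Qed.

Lemma dist_le_scal a f g e : dist_le f g e ->
  dist_le (fun t => a * f t) (fun t => a * g t) (Rabs a * e).
Proof.
  intros H x. replace (a * f x - a * g x) with (a * (f x - g x)) by ring.
  rewrite Rabs_mult. apply Rmult_le_compat_l; [apply Rabs_pos| apply H].
Qed.

Lemma cont_const c : cont_cantor (fun _ => c).
Proof. intros x eps He. exists O. intros y _. rewrite Rminus_diag, Rabs_R0. lra. Qed.

Lemma cont_plus f g : cont_cantor f -> cont_cantor g -> cont_cantor (fun t => f t + g t).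
Proof.
  intros Hf Hg x eps He.
  destruct (Hf x (eps/2)) as [n1 H1]; [lra|]. destruct (Hg x (eps/2)) as [n2 H2]; [lra|].
  exists (n1 + n2)%nat. intros y Hy.
  replace (f y + g y - (f x + g x)) with ((f y - f x) + (g y - g x)) by ring.
  eapply Rle_lt_trans; [apply Rabs_triang|].
  assert (A1 := H1 y (fun k Hk => Hy k ltac:(lia))). assert (A2 := H2 y (fun k Hk => Hy k ltac:(lia))). lra.
Qed.

Lemma cont_scal a f : cont_cantor f -> cont_cantor (fun t => a * f t).
Proof.
  intros Hf x eps He.
  destruct (Hf x (eps / (Rabs a + 1))) as [n H].
  { apply Rdiv_lt_0_compat; [lra| pose proof (Rabs_pos a); lra]. }
  exists n. intros y Hy. specialize (H y Hy).
  replace (a * f y - a * f x) with (a * (f y - f x)) by ring. rewrite Rabs_mult.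
  pose proof (Rabs_pos a). pose proof (Rabs_pos (f y - f x)).
  apply Rle_lt_trans with ((Rabs a + 1) * Rabs (f y - f x)); [nra|].
  apply Rlt_le_trans with ((Rabs a + 1) * (eps / (Rabs a + 1))).
  - apply Rmult_lt_compat_l; lra.
  - right; field; lra.
Qed.

Lemma cont_minus f g : cont_cantor f -> cont_cantor g -> cont_cantor (fun t => f t - g t).
Proof.
  intros Hf Hg. assert (H := cont_plus f (fun t => -1 * g t) Hf (cont_scal (-1) g Hg)).
  intros x eps He. destruct (H x eps He) as [n Hn]. exists n. intros y Hy. specialize (Hn y Hy).
  replace (f y - g y - (f x - g x)) with (f y + -1 * g y - (f x + -1 * g x)) by ring. exact Hn.
Qed.

Lemma cont_ext f g : (forall x, f x = g x) -> cont_cantor f -> cont_cantor g.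
Proof. intros H Hf x eps He. destruct (Hf x eps He) as [n Hn]. exists n. intros y Hy. rewrite <- !H. auto. Qed.

Lemma fsum_ext n c d : (forall i, (i < n)%nat -> c i = d i) -> fsum n c = fsum n d.
Proof. induction n; simpl; intros H; auto. rewrite IHn by (intros; apply H; lia). rewrite H by lia. auto. Qed.

Lemma fsum_plus n c d : fsum n (fun i => c i + d i) = fsum n c + fsum n d.
Proof. induction n; simpl; [ring|]. rewrite IHn. ring. Qed.

Lemma fsum_scal n a c : fsum n (fun i => a * c i) = a * fsum n c.
Proof. induction n; simpl; [ring|]. rewrite IHn. ring. Qed.

Lemma fsum_zero n : fsum n (fun _ => 0) = 0.
Proof. induction n; simpl; auto. rewrite IHn; ring. Qed.

Lemma fsum_abs n c : Rabs (fsum n c) <= fsum n (fun i => Rabs (c i)).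
Proof. induction n; simpl. rewrite Rabs_R0; lra. eapply Rle_trans; [apply Rabs_triang|]. lra. Qed.

Lemma fsum_le n c d : (forall i, (i < n)%nat -> c i <= d i) -> fsum n c <= fsum n d.
Proof. induction n; simpl; intros H. lra. assert (H1 := H n ltac:(lia)). assert (fsum n c <= fsum n d) by (apply IHn; intros; apply H; lia). lra. Qed.

Lemma fsum_nonneg n c : (forall i, (i < n)%nat -> 0 <= c i) -> 0 <= fsum n c.
Proof. intros H. rewrite <- (fsum_zero n). apply fsum_le. auto. Qed.

Lemma fsum_term_le n c i : (forall j, (j < n)%nat -> 0 <= c j) -> (i < n)%nat -> c i <= fsum n c.
Proof.
  induction n; intros H Hi; simpl. lia.
  assert (0 <= fsum n c) by (apply fsum_nonneg; intros; apply H; lia).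
  destruct (Nat.eq_dec i n) as [->|Hne]. lra.
  assert (c i <= fsum n c) by (apply IHn; [intros; apply H; lia| lia]). assert (0 <= c n) by (apply H; lia). lra.
Qed.

Lemma fsum_pad n m c : (n <= m)%nat -> (forall i, (n <= i)%nat -> c i = 0) -> fsum m c = fsum n c.
Proof.
  intros Hnm Hc. induction m.
  - assert (n = O) by lia. subst. reflexivity.
  - destruct (Nat.eq_dec n (S m)) as [->|Hne]. reflexivity.
    simpl. rewrite IHm by lia. rewrite (Hc m) by lia. ring.
Qed.

Definition S1 (n : nat) (c : nat -> R) : R := fsum n (fun i => Rabs (c i)).

Lemma S1_nonneg n c : 0 <= S1 n c.
Proof. apply fsum_nonneg. intros; apply Rabs_pos. Qed.

Definition comb (n : nat) (c : nat -> R) (v : nat -> Cantor -> R) : Cantor -> R :=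
  fun t => fsum n (fun i => c i * v i t).

Lemma cont_comb n c v : (forall i, (i < n)%nat -> cont_cantor (v i)) -> cont_cantor (comb n c v).
Proof.
  induction n; intros H; unfold comb; simpl.
  - apply cont_const.
  - apply cont_plus. apply IHn; intros; apply H; lia. apply cont_scal; apply H; lia.
Qed.

Lemma comb_perturb n c v w e : (forall i, (i < n)%nat -> dist_le (v i) (w i) e) ->
  dist_le (comb n c v) (comb n c w) (S1 n c * e).
Proof.
  intros H x. unfold comb, S1.
  induction n; simpl.
  - rewrite Rminus_diag, Rabs_R0; lra.
  - replace (fsum n (fun i : nat => c i * v i x) + c n * v n x - (fsum n (fun i : nat => c i * w i x) + c n * w n x))
      with ((fsum n (fun i : nat => c i * v i x) - fsum n (fun i : nat => c i * w i x)) + c n * (v n x - w n x)) by ring.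
    eapply Rle_trans; [apply Rabs_triang|]. rewrite Rabs_mult.
    assert (A := IHn (fun i Hi => H i ltac:(lia))).
    assert (B := H n ltac:(lia) x). pose proof (Rabs_pos (c n)).
    assert (Rabs (c n) * Rabs (v n x - w n x) <= Rabs (c n) * e) by (apply Rmult_le_compat_l; auto).
    rewrite Rmult_plus_distr_r. lra.
Qed.

Definition hp (k : nat) : R := (/2) ^ k.

Lemma hp_pos k : 0 < hp k.
Proof. unfold hp. apply pow_lt. lra. Qed.

Lemma hp_S k : hp (S k) = hp k / 2.
Proof. unfold hp. simpl. field. Qed.

Lemma hp_le k m : (k <= m)%nat -> hp m <= hp k.
Proof.
  intros H. induction H. lra. rewrite hp_S. pose proof (hp_pos m). lra.
Qed.

Lemma hp_small C eps : 0 < eps -> exists k, C * hp k < eps.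
Proof.
  intros He. destruct (Rle_or_lt C 0) as [HC|HC].
  - exists O. pose proof (hp_pos 0). nra.
  - destruct (pow_lt_1_zero (/2) ltac:(rewrite Rabs_pos_eq; lra) (eps / C)) as [N HN].
    { apply Rdiv_lt_0_compat; lra. }
    exists N. specialize (HN N (le_n N)). rewrite Rabs_pos_eq in HN by (apply Rlt_le, hp_pos).
    unfold hp. apply Rmult_lt_compat_l with (r := C) in HN; [|lra].
    replace (C * (eps / C)) with eps in HN by (field; lra). exact HN.
Qed.

Lemma le_hp_lim a b C : (forall k, a <= b + C * hp k) -> a <= b.
Proof.
  intros H. destruct (Rle_or_lt a b) as [|Hab]; auto.
  destruct (hp_small C (a - b)) as [k Hk]; [lra|]. specialize (H k). lra.
Qed.

Lemma dist_le_lim f g e C : (forall k, dist_le f g (e + C * hp k)) -> dist_le f g e.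
Proof. intros H x. apply le_hp_lim with C. intro k. apply H. Qed.

Lemma geom_tail (f : nat -> Cantor -> R) c :
  (forall k, dist_le (f k) (f (S k)) (c * hp k)) ->
  forall k m, (k <= m)%nat -> dist_le (f k) (f m) (2 * c * (hp k - hp m)).
Proof.
  intros H k m Hkm. induction Hkm.
  - apply dist_le_mono with 0. apply dist_le_refl. lra.
  - eapply dist_le_mono. eapply dist_le_tri; [apply IHHkm| apply H].
    rewrite hp_S. lra.
Qed.

Lemma lim_bound (u : nat -> R) l a b k : Un_cv u l -> (forall m, (k <= m)%nat -> Rabs (u m - a) <= b) -> Rabs (l - a) <= b.
Proof.
  intros Hcv Hb. apply Rnot_lt_le. intro Hlt.
  destruct (Hcv (Rabs (l - a) - b)) as [N HN]; [lra|].
  specialize (HN (Nat.max N k) ltac:(lia)). specialize (Hb (Nat.max N k) ltac:(lia)). unfold R_dist in HN.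
  assert (Rabs (l - a) <= Rabs (u (Nat.max N k) - l) + Rabs (u (Nat.max N k) - a)).
  { replace (l - a) with (-(u (Nat.max N k) - l) + (u (Nat.max N k) - a)) by ring.
    eapply Rle_trans; [apply Rabs_triang|]. rewrite Rabs_Ropp. lra. }
  lra.
Qed.

Lemma complete_geom (f : nat -> Cantor -> R) c :
  (forall k, dist_le (f k) (f (S k)) (c * hp k)) ->
  exists g, (forall k, dist_le g (f k) (2 * c * hp k)) /\
            ((forall k, cont_cantor (f k)) -> cont_cantor g).
Proof.
  intros H. assert (Ht := geom_tail f c H).
  assert (Hc : 0 <= c) by (apply Rmult_le_reg_r with (hp 0); [apply hp_pos|]; rewrite Rmult_0_l; eapply dist_le_nonneg; apply (H O)).
  assert (Cau : forall t, Cauchy_crit (fun k => f k t)).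
  { intros t eps He. destruct (hp_small (2 * c) eps He) as [N HN]. exists N. intros n m Hn Hm.
    unfold R_dist. destruct (Nat.le_ge_cases n m) as [Hnm|Hnm].
    - specialize (Ht n m Hnm t). pose proof (hp_pos m). pose proof (hp_le N n Hn). nra.
    - specialize (Ht m n Hnm t). rewrite Rabs_minus_sym. pose proof (hp_pos n). pose proof (hp_le N m Hm). nra. }
  set (g := fun t => proj1_sig (R_complete _ (Cau t))).
  assert (Hg : forall k, dist_le g (f k) (2 * c * hp k)).
  { intros k t. unfold g. destruct (R_complete _ (Cau t)) as [l Hl]. simpl.
    apply lim_bound with (u := fun k => f k t) (k := k); auto.
    intros m Hm. specialize (Ht k m Hm t). rewrite Rabs_minus_sym. pose proof (hp_pos m). nra. }
  exists g. split; auto.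
  intros Hcont x eps He. destruct (hp_small (2 * c) (eps / 3)) as [k Hk]; [lra|].
  destruct (Hcont k x (eps / 3)) as [n Hn]; [lra|]. exists n. intros y Hy.
  specialize (Hn y Hy). assert (A := Hg k y). assert (B := Hg k x).
  replace (g y - g x) with ((g y - f k y) + (f k y - f k x) + (f k x - g x)) by ring.
  eapply Rle_lt_trans; [eapply Rle_trans; [apply Rabs_triang| apply Rplus_le_compat_r; apply Rabs_triang]|].
  rewrite (Rabs_minus_sym (f k x)). lra.
Qed.

Definition agree (n : nat) (x y : Cantor) : Prop := forall k, (k < n)%nat -> x k = y k.

Definition infag (xs : nat -> Cantor) (k : nat) (p : Cantor) : Prop :=
  forall N, exists n, (n >= N)%nat /\ agree k (xs n) p.

Fixpoint lp (xs : nat -> Cantor) (k : nat) : Cantor :=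
  match k with
  | O => fun _ => false
  | S k' => fun i => if Nat.eqb i k' then
        (if excluded_middle_informative (infag xs (S k') (fun j => if Nat.eqb j k' then true else lp xs k' j))
         then true else false)
      else lp xs k' i
  end.

Lemma lp_stable xs k i : (i < k)%nat -> lp xs (S k) i = lp xs k i.
Proof. intros H. simpl. destruct (Nat.eqb_spec i k); [lia|reflexivity]. Qed.

Lemma lp_stable2 xs k m i : (i < k)%nat -> (k <= m)%nat -> lp xs m i = lp xs k i.
Proof. intros H1 H2. induction H2; auto. rewrite lp_stable by lia. auto. Qed.

Lemma lp_inf xs : forall k, infag xs k (lp xs k).
Proof.
  induction k.
  - intros N. exists N. split; [lia|]. intros i Hi; lia.
  - set (pt := fun j => if Nat.eqb j k then true else lp xs k j).
    set (pf := fun j => if Nat.eqb j k then false else lp xs k j).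
    assert (Hor : infag xs (S k) pt \/ infag xs (S k) pf).
    { destruct (classic (infag xs (S k) pt)) as [Hp|Hp]; [left; auto| right].
      unfold infag in Hp. apply not_all_ex_not in Hp. destruct Hp as [N0 HN0].
      intros N. destruct (IHk (Nat.max N N0)) as [n [Hn Ha]]. exists n. split; [lia|].
      assert (Hnot : ~ agree (S k) (xs n) pt) by (intro Hc; apply HN0; exists n; split; [lia|auto]).
      intros i Hi. unfold pf. destruct (Nat.eqb_spec i k).
      - subst. destruct (xs n k) eqn:E; auto. exfalso; apply Hnot.
        intros j Hj. unfold pt. destruct (Nat.eqb_spec j k). subst; auto. apply Ha; lia.
      - apply Ha; lia. }
    assert (E : forall i, (i < S k)%nat -> lp xs (S k) i = (if excluded_middle_informative (infag xs (S k) pt) then pt else pf) i).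
    { intros i Hi. unfold pt, pf. cbn [lp]. destruct (excluded_middle_informative _); cbv beta; destruct (Nat.eqb i k); reflexivity. }
    intros N. destruct (excluded_middle_informative (infag xs (S k) pt)) as [Hp|Hp].
    + destruct (Hp N) as [n [Hn Ha]]. exists n. split; auto. intros i Hi. rewrite E by auto. apply Ha; auto.
    + destruct Hor as [Hq|Hq]; [contradiction|]. destruct (Hq N) as [n [Hn Ha]]. exists n. split; auto.
      intros i Hi. rewrite E by auto. apply Ha; auto.
Qed.

Lemma Rabs_sub_le a b : Rabs (a - b) <= Rabs a + Rabs b.
Proof. unfold Rminus. rewrite <- (Rabs_Ropp b). apply Rabs_triang. Qed.

Lemma unif_cont f : cont_cantor f -> forall eps, 0 < eps ->
  exists n, forall x y, agree n x y -> Rabs (f x - f y) < eps.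
Proof.
  intros Hf eps He. apply NNPP. intro Hn.
  assert (H : forall n, exists p : Cantor * Cantor, agree n (fst p) (snd p) /\ eps <= Rabs (f (fst p) - f (snd p))).
  { intros n. apply NNPP. intro Hc. apply Hn. exists n. intros x y Ha. apply Rnot_le_lt. intro Hle. apply Hc. exists (x, y). auto. }
  destruct (choice _ H) as [ps Hps].
  set (xs := fun n => fst (ps n)).
  set (xst := fun i => lp xs (S i) i).
  assert (Hag : forall k, agree k xst (lp xs k)).
  { intros k i Hi. unfold xst. symmetry. apply lp_stable2; lia. }
  destruct (Hf xst (eps / 2)) as [n0 Hn0]; [lra|].
  destruct (lp_inf xs n0 n0) as [n [Hnn Ha]].
  destruct (Hps n) as [Hagn Hlt].
  assert (A1 : Rabs (f (fst (ps n)) - f xst) < eps / 2).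
  { apply Hn0. intros k Hk. rewrite (Hag n0 k Hk). apply (Ha k Hk). }
  assert (A2 : Rabs (f (snd (ps n)) - f xst) < eps / 2).
  { apply Hn0. intros k Hk. rewrite (Hag n0 k Hk). rewrite <- (Hagn k ltac:(lia)). apply (Ha k Hk). }
  replace (f (fst (ps n)) - f (snd (ps n))) with ((f (fst (ps n)) - f xst) - (f (snd (ps n)) - f xst)) in Hlt by ring.
  pose proof (Rabs_sub_le (f (fst (ps n)) - f xst) (f (snd (ps n)) - f xst)). lra.
Qed.

Definition trunc (n : nat) (x : Cantor) : Cantor := fun i => if Nat.ltb i n then x i else false.
Definition ccons (b : bool) (z : Cantor) : Cantor := fun i => match i with O => b | S j => z j end.
Definition ctl (x : Cantor) : Cantor := fun i => x (S i).

Lemma trunc_S n x : trunc (S n) x = ccons (x O) (trunc n (ctl x)).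
Proof. apply functional_extensionality. intros [|i]; reflexivity. Qed.

Lemma trunc_bounded : forall n (g : Cantor -> R), exists M, forall x, Rabs (g (trunc n x)) <= M.
Proof.
  induction n; intros g.
  - exists (Rabs (g (trunc 0 pt0))). intros x. replace (trunc 0 x) with (trunc 0 pt0); [lra|].
    apply functional_extensionality; intro i; reflexivity.
  - destruct (IHn (fun z => g (ccons true z))) as [M1 H1]. destruct (IHn (fun z => g (ccons false z))) as [M2 H2].
    exists (Rmax M1 M2). intros x. rewrite trunc_S. destruct (x O).
    + eapply Rle_trans; [apply H1| apply Rmax_l].
    + eapply Rle_trans; [apply H2| apply Rmax_r].
Qed.

Lemma agree_trunc n x : agree n x (trunc n x).
Proof. intros k Hk. unfold trunc. apply Nat.ltb_lt in Hk. rewrite Hk. auto. Qed.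

Lemma cont_bounded f : cont_cantor f -> exists M, forall x, Rabs (f x) <= M.
Proof.
  intros Hf. destruct (unif_cont f Hf 1) as [n Hn]; [lra|].
  destruct (trunc_bounded n f) as [M HM]. exists (M + 1). intros x.
  specialize (Hn x (trunc n x) (agree_trunc n x)). specialize (HM x).
  replace (f x) with ((f x - f (trunc n x)) + f (trunc n x)) by ring.
  eapply Rle_trans; [apply Rabs_triang|]. lra.
Qed.

Lemma cont_bounded_pos f : cont_cantor f -> exists M, 0 < M /\ dist_le f zf M.
Proof.
  intros Hf. destruct (cont_bounded f Hf) as [M HM]. exists (Rabs M + 1). split. pose proof (Rabs_pos M); lra.
  apply dist_le_zf. intros x. specialize (HM x). pose proof (Rle_abs M). lra.
Qed.

Definition qr (k : nat) : R :=
  let (a, bc) := Cantor.of_nat k in let (b, c) := Cantor.of_nat bc in (INR a - INR b) / INR (S c).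

Lemma IZR_nat_diff (z : Z) : exists a b, IZR z = INR a - INR b.
Proof.
  destruct (Z_le_gt_dec 0 z) as [H|H].
  - exists (Z.to_nat z), O. rewrite (INR_IZR_INZ (Z.to_nat z)), Z2Nat.id by auto. simpl; ring.
  - exists O, (Z.to_nat (- z)). rewrite (INR_IZR_INZ (Z.to_nat (- z))), Z2Nat.id by lia. rewrite opp_IZR. simpl; ring.
Qed.

Lemma qr_dense x eps : 0 < eps -> exists k, Rabs (qr k - x) < eps.
Proof.
  intros He.
  destruct (archimed (/ eps)) as [Ha _].
  set (c := Z.to_nat (up (/ eps))).
  assert (Hc : / eps < INR (S c)).
  { rewrite S_INR. unfold c. destruct (Z_le_gt_dec 0 (up (/eps))) as [H|H].
    - rewrite (INR_IZR_INZ (Z.to_nat _)), Z2Nat.id by auto. lra.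
    - assert (0 < / eps) by (apply Rinv_0_lt_compat; auto). assert (IZR (up (/eps)) <= -1) by (apply IZR_le; lia). lra. }
  assert (HS : 0 < INR (S c)) by (apply lt_0_INR; lia).
  destruct (archimed (x * INR (S c))) as [H1 H2].
  destruct (IZR_nat_diff (up (x * INR (S c)) - 1)) as [a [b Hab]].
  exists (Cantor.to_nat (a, Cantor.to_nat (b, c))). unfold qr. rewrite !Cantor.cancel_of_to.
  rewrite <- Hab, minus_IZR.
  assert (Hlt : / INR (S c) < eps).
  { apply Rmult_lt_reg_l with (eps * / eps * INR (S c)). 
    assert (0 < /eps) by (apply Rinv_0_lt_compat; auto). apply Rmult_lt_0_compat; [nra|lra].
    replace (eps * / eps * INR (S c) * / INR (S c)) with 1 by (field; lra).
    replace (eps * / eps * INR (S c) * eps) with (eps * INR (S c)) by (field; lra).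
    apply Rmult_lt_reg_l with (/eps). apply Rinv_0_lt_compat; auto.
    replace (/ eps * (eps * INR (S c))) with (INR (S c)) by (field; lra). lra. }
  apply Rle_lt_trans with (/ INR (S c)); [|exact Hlt].
  replace ((IZR (up (x * INR (S c))) - 1) / INR (S c) - x) with ((IZR (up (x * INR (S c))) - 1 - x * INR (S c)) / INR (S c)) by (field; lra).
  unfold Rdiv. rewrite Rabs_mult. rewrite (Rabs_pos_eq (/ INR (S c))) by (left; apply Rinv_0_lt_compat; auto).
  assert (Rabs (IZR (up (x * INR (S c))) - 1 - x * INR (S c)) <= 1) by (apply Rabs_le; lra).
  assert (0 < / INR (S c)) by (apply Rinv_0_lt_compat; auto). nra.
Qed.

Fixpoint code (m : nat) (t : Cantor) : nat :=
  match m with O => O | S m' => (2 * code m' t + (if t m' then 1 else 0))%nat end.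

Lemma code_lt m t : (code m t < 2 ^ m)%nat.
Proof. induction m; simpl; [lia|]. destruct (t m); lia. Qed.

Lemma code_inj m t t' : code m t = code m t' -> agree m t t'.
Proof.
  induction m; simpl; intros H. intros k Hk; lia.
  assert (code m t = code m t' /\ t m = t' m) as [H1 H2].
  { destruct (t m), (t' m); split; auto; lia. }
  intros k Hk. destruct (Nat.eq_dec k m). subst; auto. apply IHm; auto; lia.
Qed.

Lemma code_agree m t t' : agree m t t' -> code m t = code m t'.
Proof.
  induction m; simpl; intros H; auto. rewrite IHm by (intros k Hk; apply H; lia). rewrite (H m) by lia. auto.
Qed.

Definition DD (j : nat) : Cantor -> R :=
  fun t => qr (dec (snd (Cantor.of_nat j)) (code (fst (Cantor.of_nat j)) t)).

Lemma DD_cont j : cont_cantor (DD j).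
Proof.
  intros x eps He. exists (fst (Cantor.of_nat j)). intros y Hy. unfold DD.
  rewrite (code_agree _ y x) by (intros k Hk; apply Hy; auto). rewrite Rminus_diag, Rabs_R0. lra.
Qed.

Lemma DD_dense f eps : cont_cantor f -> 0 < eps -> exists j, dist_le f (DD j) eps.
Proof.
  intros Hf He. destruct (unif_cont f Hf (eps / 2)) as [m Hm]; [lra|].
  assert (Hs : forall p : nat, exists t : Cantor, (exists t', code m t' = p) -> code m t = p).
  { intros p. destruct (classic (exists t', code m t' = p)) as [[t' Ht']|Hn]. exists t'; auto. exists pt0; intros Hc; contradiction. }
  destruct (choice _ Hs) as [smp Hsmp].
  assert (Hv : forall p : nat, exists k, Rabs (qr k - f (smp p)) < eps / 2) by (intros p; apply qr_dense; lra).
  destruct (choice _ Hv) as [s Hsv].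
  destruct (dec_surj (2 ^ m) s) as [j' Hj'].
  exists (Cantor.to_nat (m, j')). intros t. unfold DD. rewrite Cantor.cancel_of_to. simpl.
  rewrite Hj' by apply code_lt.
  assert (Hc : code m (smp (code m t)) = code m t) by (apply Hsmp; exists t; auto).
  specialize (Hsv (code m t)). assert (A := Hm t (smp (code m t)) (code_inj _ _ _ (eq_sym Hc))).
  replace (f t - qr (s (code m t))) with ((f t - f (smp (code m t))) - (qr (s (code m t)) - f (smp (code m t)))) by ring.
  eapply Rle_trans; [apply Rabs_triang|]. rewrite Rabs_Ropp. lra.
Qed.

Lemma Rabs_eq_0 x : Rabs x = 0 -> x = 0.
Proof. intros H. destruct (Req_dec x 0); auto. apply Rabs_no_R0 in H0. contradiction. Qed.

Lemma fsum_const n a : fsum n (fun _ => a) = INR n * a.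
Proof. induction n; simpl fsum. simpl; ring. rewrite IHn, S_INR. ring. Qed.

Lemma lin_indep_prefix n v : lin_indep (S n) v -> lin_indep n v.
Proof.
  intros H c Hc i Hi.
  set (c' := fun j => if Nat.ltb j n then c j else 0).
  assert (E : forall j, (j < n)%nat -> c' j = c j) by (intros j Hj; unfold c'; apply Nat.ltb_lt in Hj; rewrite Hj; auto).
  rewrite <- E by auto. apply H; [|lia]. intros t. simpl fsum.
  assert (Hn : c' n = 0) by (unfold c'; rewrite Nat.ltb_irrefl; auto). rewrite Hn.
  rewrite (fsum_ext n _ (fun i => c i * v i t)). rewrite Hc. ring. intros j Hj. rewrite E; auto.
Qed.

Lemma dist_comb_sub n c d v e : dist_le (comb n c v) (comb n d v) e ->
  dist_le (comb n (fun i => c i - d i) v) zf e.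
Proof.
  intros H. apply dist_le_zf. intros x. specialize (H x). unfold comb in *.
  rewrite (fsum_ext n _ (fun i => c i * v i x + (-1) * (d i * v i x))) by (intros; ring).
  rewrite fsum_plus, fsum_scal. replace (fsum n (fun i : nat => c i * v i x) + -1 * fsum n (fun i : nat => d i * v i x))
    with (fsum n (fun i : nat => c i * v i x) - fsum n (fun i : nat => d i * v i x)) by ring. exact H.
Qed.

Lemma LB n : forall v, (forall i, (i < n)%nat -> cont_cantor (v i)) -> lin_indep n v ->
  exists m, 0 < m /\ forall c e, dist_le (comb n c v) zf e -> forall i, (i < n)%nat -> m * Rabs (c i) <= e.
Proof.
  induction n as [|n IH]; intros v Hv Hli.
  - exists 1. split; [lra|]. intros c e _ i Hi; lia.
  - destruct (IH v (fun i Hi => Hv i ltac:(lia)) (lin_indep_prefix n v Hli)) as [m' [Hm' HLB]].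
    assert (Hd : exists d, 0 < d /\ forall c e, dist_le (fun t => v n t - comb n c v t) zf e -> d <= e).
    { apply NNPP. intro Hno.
      assert (Hk : forall k, exists c, dist_le (fun t => v n t - comb n c v t) zf (hp k)).
      { intro k. apply NNPP. intro Hc. apply Hno. exists (hp k). split; [apply hp_pos|].
        intros c e He. apply Rnot_lt_le. intro Hlt. apply Hc. exists c. eapply dist_le_mono; [exact He| lra]. }
      destruct (choice _ Hk) as [cs Hcs].
      assert (Hstep : forall k i, (i < n)%nat -> m' * Rabs (cs k i - cs (S k) i) <= 2 * hp k).
      { intros k i Hi. apply (HLB (fun i => cs k i - cs (S k) i)); auto.
        apply dist_comb_sub. eapply dist_le_mono.
        - eapply dist_le_tri; [apply dist_le_sym|].
          + apply (dist_le_diff (v n)). apply (dist_le_ext (fun t => v n t - comb n (cs k) v t) _ zf zf); auto; apply Hcs.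
          + apply (dist_le_diff (v n)). apply (dist_le_ext (fun t => v n t - comb n (cs (S k)) v t) _ zf zf); auto; apply Hcs.
        - rewrite hp_S. pose proof (hp_pos k). lra. }
      assert (Hlim : forall i, exists l, (i < n)%nat -> forall k, Rabs (l - cs k i) <= 4 / m' * hp k).
      { intros i. destruct (Nat.lt_ge_cases i n) as [Hi|Hi]; [|exists 0; intros; lia].
        destruct (complete_geom (fun k => fun _ : Cantor => cs k i) (2 / m')) as [g [Hg _]].
        - intros k x. simpl. apply Rmult_le_reg_l with m'; auto.
          replace (m' * (2 / m' * hp k)) with (2 * hp k) by (field; lra). apply Hstep; auto.
        - exists (g pt0). intros _ k. specialize (Hg k pt0). simpl in Hg. replace (4 / m' * hp k) with (2 * (2 / m') * hp k) by (field; lra). exact Hg. }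
      destruct (choice _ Hlim) as [l Hl].
      assert (Heq : forall t, v n t = comb n l v t).
      { intros t. apply Rminus_diag_uniq. apply Rabs_eq_0. apply Rle_antisym; [|apply Rabs_pos].
        apply le_hp_lim with (C := 1 + 4 / m' * fsum n (fun i => Rabs (v i t))). intros k.
        rewrite Rplus_0_l.
        replace (v n t - comb n l v t) with ((v n t - comb n (cs k) v t) + (comb n (cs k) v t - comb n l v t)) by ring.
        eapply Rle_trans; [apply Rabs_triang|].
        assert (A1 : Rabs (v n t - comb n (cs k) v t) <= hp k) by (assert (B := Hcs k t); unfold zf in B; rewrite Rminus_0_r in B; exact B).
        assert (A2 : Rabs (comb n (cs k) v t - comb n l v t) <= 4 / m' * hp k * fsum n (fun i => Rabs (v i t))).
        { unfold comb. rewrite <- fsum_scal.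
          replace (fsum n (fun i : nat => cs k i * v i t) - fsum n (fun i : nat => l i * v i t))
            with (fsum n (fun i : nat => (cs k i - l i) * v i t)).
          2:{ rewrite (fsum_ext n _ (fun i => cs k i * v i t + (-1) * (l i * v i t))) by (intros; ring).
              rewrite fsum_plus, fsum_scal. ring. }
          eapply Rle_trans; [apply fsum_abs|]. apply fsum_le. intros i Hi. rewrite Rabs_mult.
          apply Rmult_le_compat_r; [apply Rabs_pos|]. rewrite Rabs_minus_sym. apply Hl; auto. }
        pose proof (hp_pos k). nra. }
      assert (Hc := Hli (fun i => if Nat.ltb i n then l i else -1)).
      assert (Hz : forall t, fsum (S n) (fun i => (if Nat.ltb i n then l i else -1) * v i t) = 0).
      { intros t. simpl. rewrite Nat.ltb_irrefl. rewrite (fsum_ext n _ (fun i => l i * v i t)).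
        - rewrite (Heq t). unfold comb. ring.
        - intros i Hi. apply Nat.ltb_lt in Hi. rewrite Hi. auto. }
      specialize (Hc Hz n ltac:(lia)). cbv beta in Hc. rewrite Nat.ltb_irrefl in Hc. lra. }
    destruct Hd as [d [Hd0 Hd]].
    destruct (cont_bounded_pos (v n) (Hv n ltac:(lia))) as [K [HK0 HK]].
    exists (Rmin d (m' / (1 + K / d))). split.
    { apply Rmin_pos; auto. apply Rdiv_lt_0_compat; auto. assert (0 < K / d) by (apply Rdiv_lt_0_compat; auto). lra. }
    intros c e He.
    assert (He0 : 0 <= e) by (eapply dist_le_nonneg; eauto).
    assert (Hcn : Rabs (c n) * d <= e).
    { destruct (Req_dec (c n) 0) as [Z|NZ]. rewrite Z, Rabs_R0. lra.
      assert (Hp : 0 < Rabs (c n)) by (apply Rabs_pos_lt; auto).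
      assert (H1 : dist_le (fun t => v n t - comb n (fun i => - c i / c n) v t) zf (e / Rabs (c n))).
      { apply dist_le_zf. intros x. assert (B := proj1 (dist_le_zf _ _) He x).
        unfold comb in *. simpl in B.
        replace (v n x - fsum n (fun i : nat => - c i / c n * v i x)) with (/ c n * (fsum n (fun i : nat => c i * v i x) + c n * v n x)).
        - rewrite Rabs_mult, Rabs_inv. unfold Rdiv. rewrite Rmult_comm. apply Rmult_le_compat_r; auto.
          left; apply Rinv_0_lt_compat; auto.
        - rewrite (fsum_ext n (fun i => - c i / c n * v i x) (fun i => (- / c n) * (c i * v i x))) by (intros; field; auto).
          rewrite fsum_scal. field; auto. }
      specialize (Hd _ _ H1). apply Rmult_le_compat_l with (r := Rabs (c n)) in Hd; [|lra].
      replace (Rabs (c n) * (e / Rabs (c n))) with e in Hd by (field; lra). lra. }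
    assert (Hrest : dist_le (comb n c v) zf (e + K * (e / d))).
    { apply dist_le_zf. intros x. assert (B := proj1 (dist_le_zf _ _) He x). assert (B2 := proj1 (dist_le_zf _ _) HK x).
      unfold comb in *. simpl in B.
      replace (fsum n (fun i : nat => c i * v i x)) with ((fsum n (fun i : nat => c i * v i x) + c n * v n x) - c n * v n x) by ring.
      eapply Rle_trans; [apply Rabs_sub_le|]. rewrite Rabs_mult.
      assert (Rabs (c n) <= e / d) by (apply Rmult_le_reg_r with d; auto; unfold Rdiv; rewrite Rmult_assoc, Rinv_l; lra).
      pose proof (Rabs_pos (c n)). pose proof (Rabs_pos (v n x)). nra. }
    intros i Hi. destruct (Nat.eq_dec i n) as [->|Hne].
    + pose proof (Rmin_l d (m' / (1 + K / d))). pose proof (Rabs_pos (c n)). nra.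
    + assert (A := HLB c _ Hrest i ltac:(lia)).
      assert (HKd : 0 < K / d) by (apply Rdiv_lt_0_compat; auto).
      pose proof (Rmin_r d (m' / (1 + K / d))). pose proof (Rabs_pos (c i)).
      assert (m' / (1 + K / d) * Rabs (c i) <= e).
      { apply Rmult_le_reg_l with (1 + K / d); [lra|].
        replace ((1 + K / d) * (m' / (1 + K / d) * Rabs (c i))) with (m' * Rabs (c i)) by (field; lra).
        replace ((1 + K / d) * e) with (e + K * (e / d)) by (field; lra). exact A. }
      nra.
Qed.

Lemma li_open n v : (forall i, (i < n)%nat -> cont_cantor (v i)) -> lin_indep n v ->
  exists rho, 0 < rho /\ forall u, (forall i, (i < n)%nat -> dist_le (v i) (u i) rho) -> lin_indep n u.
Proof.
  intros Hv Hli. destruct (LB n v Hv Hli) as [m [Hm HLB]].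
  exists (m / (2 * (INR n + 1))). assert (Hn : 0 <= INR n) by apply pos_INR.
  split. apply Rdiv_lt_0_compat; lra.
  intros u Hu c Hc.
  assert (Hd : dist_le (comb n c v) zf (S1 n c * (m / (2 * (INR n + 1))))).
  { apply dist_le_sym. apply (dist_le_ext (comb n c u) _ (comb n c v) _).
    - intros x; unfold comb, zf; rewrite Hc; auto.
    - auto.
    - apply dist_le_sym, comb_perturb; auto. }
  assert (Hb := HLB c _ Hd).
  assert (Hsum : m * S1 n c <= INR n * (S1 n c * (m / (2 * (INR n + 1))))).
  { unfold S1. rewrite <- fsum_scal, <- fsum_const. apply fsum_le. auto. }
  assert (HS : S1 n c = 0).
  { pose proof (S1_nonneg n c). apply Rle_antisym; auto.
    assert (INR n * (S1 n c * (m / (2 * (INR n + 1)))) <= S1 n c * (m / 2)).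
    { replace (INR n * (S1 n c * (m / (2 * (INR n + 1))))) with (S1 n c * (m / 2) * (INR n / (INR n + 1))) by (field; lra).
      assert (INR n / (INR n + 1) <= 1) by (apply Rmult_le_reg_r with (INR n + 1); [lra|]; unfold Rdiv; rewrite Rmult_assoc, Rinv_l; lra).
      assert (0 <= S1 n c * (m/2)) by (apply Rmult_le_pos; lra). nra. }
    nra. }
  intros i Hi. apply Rabs_eq_0. apply Rle_antisym; [|apply Rabs_pos].
  rewrite <- HS. unfold S1. apply (fsum_term_le n (fun i => Rabs (c i))); auto. intros; apply Rabs_pos.
Qed.

Definition EN (N : nat) (X : fset) : Prop := exists v, (forall i, (i < N)%nat -> X (v i)) /\ lin_indep N v.

Definition goodt (N : nat) (s : nat) (p : nat) : Prop :=
  forall u, (forall i, (i < N)%nat -> ball (DD (dec s i)) (hp p) (u i)) -> lin_indep N u.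

Definition FN (N : nat) (X : fset) : Prop :=
  exists j, goodt N (fst (Cantor.of_nat j)) (snd (Cantor.of_nat j)) /\
    forall i, (i < N)%nat -> meets (ball (DD (dec (fst (Cantor.of_nat j)) i)) (hp (snd (Cantor.of_nat j)))) X.

Lemma sg_implP {T} (G : (T -> Prop) -> Prop) (P : Prop) (A : T -> Prop) :
  (exists A, G A) -> sigma_gen G A -> sigma_gen G (fun x => P -> A x).
Proof.
  intros H HA. destruct (classic P) as [HP|HP].
  - eapply sg_ext; [exact HA|]. intros; tauto.
  - eapply sg_ext; [apply (sg_const G True H)|]. intros; tauto.
Qed.

Lemma FN_borel N : sigma_gen effros_gen (FN N).
Proof.
  apply sg_cup. intro j. apply sg_andP; [apply effros_ex|].
  apply sg_cap. intro i. apply sg_implP; [apply effros_ex|]. apply meets_ball_borel.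
Qed.

Lemma FN_EN N X : SB X -> (FN N X <-> EN N X).
Proof.
  intros HX. split.
  - intros [j [Hg Hm]].
    assert (Hc : forall i, exists u, (i < N)%nat -> X u /\ ball (DD (dec (fst (Cantor.of_nat j)) i)) (hp (snd (Cantor.of_nat j))) u).
    { intros i. destruct (Nat.lt_ge_cases i N) as [Hi|Hi]. destruct (Hm i Hi) as [u Hu]. exists u; auto. exists zf; intros; lia. }
    destruct (choice _ Hc) as [u Hu]. exists u. split. intros i Hi; apply Hu; auto.
    apply Hg. intros i Hi; apply Hu; auto.
  - intros [v [HvX Hli]].
    assert (Hcv : forall i, (i < N)%nat -> cont_cantor (v i)) by (intros i Hi; apply (proj1 HX), HvX; auto).
    destruct (li_open N v Hcv Hli) as [rho [Hrho Hop]].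
    destruct (hp_small 2 rho Hrho) as [p Hp].
    assert (Hd : forall i, exists k, (i < N)%nat -> dist_le (v i) (DD k) (hp p / 2)).
    { intros i. destruct (Nat.lt_ge_cases i N) as [Hi|Hi]. destruct (DD_dense (v i) (hp p / 2) (Hcv i Hi)) as [k Hk].
      pose proof (hp_pos p); lra. exists k; auto. exists O; intros; lia. }
    destruct (choice _ Hd) as [ks Hks].
    destruct (dec_surj N ks) as [s Hs].
    exists (Cantor.to_nat (s, p)). rewrite Cantor.cancel_of_to. simpl. split.
    + intros u Hu. apply Hop. intros i Hi. destruct (Hu i Hi) as [_ [r' [Hr' Hdu]]].
      rewrite Hs in Hdu by auto. eapply dist_le_mono. eapply dist_le_tri; [apply Hks; auto| exact Hdu]. pose proof (hp_pos p). lra.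
    + intros i Hi. exists (v i). split; auto. split; auto. exists (hp p / 2). split. pose proof (hp_pos p); lra.
      rewrite Hs by auto. apply dist_le_sym. apply Hks; auto.
Qed.

Section CS.
Variable X : fset.
Hypothesis HX : closed_subspace X.
Lemma cs_cont f : X f -> cont_cantor f. Proof. destruct HX as [H _]. apply H. Qed.
Lemma cs_zero : X zf. Proof. destruct HX as [_ [H _]]. exact H. Qed.
Lemma cs_add f g : X f -> X g -> X (fun t => f t + g t). Proof. destruct HX as [_ [_ [H _]]]. apply H. Qed.
Lemma cs_scal a f : X f -> X (fun t => a * f t). Proof. destruct HX as [_ [_ [_ [H _]]]]. apply H. Qed.
Lemma cs_closed f : cont_cantor f -> (forall e, 0 < e -> exists g, X g /\ dist_le f g e) -> X f.
Proof. destruct HX as [_ [_ [_ [_ H]]]]. apply H. Qed.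
Lemma cs_ext f g : X f -> (forall t, f t = g t) -> X g.
Proof. intros Hf H. replace g with f; auto. apply functional_extensionality; auto. Qed.
Lemma cs_sub f g : X f -> X g -> X (fun t => f t - g t).
Proof. intros Hf Hg. apply cs_ext with (fun t => f t + -1 * g t). apply cs_add; auto. apply cs_scal; auto. intros; ring. Qed.
End CS.

Fixpoint bseq (F : nat -> (Cantor -> R) * R -> (Cantor -> R) * R) (k : nat) : (Cantor -> R) * R :=
  match k with O => (zf, 1) | S k' => F k' (bseq F k') end.

Lemma baire (Y : fset) (C : nat -> fset) : closed_subspace Y ->
  (forall n y, Y y -> (forall e, 0 < e -> exists c, C n c /\ dist_le y c e) -> C n y) ->
  (forall y, Y y -> exists n, C n y) ->
  exists n y0 r, Y y0 /\ 0 < r /\ forall y, Y y -> dist_le y y0 r -> C n y.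
Proof.
  intros HY Hcl Hcov. apply NNPP. intro Hno.
  assert (H : forall n y0 r, Y y0 -> 0 < r -> exists y, Y y /\ dist_le y y0 r /\ ~ C n y).
  { intros n y0 r Hy0 Hr. apply NNPP. intro Hc. apply Hno. exists n, y0, r. repeat split; auto.
    intros y Hy Hd. apply NNPP. intro Hn. apply Hc. exists y. auto. }
  assert (Hstep : forall k (p : (Cantor -> R) * R), exists p' : (Cantor -> R) * R,
    (Y (fst p) /\ 0 < snd p) -> (Y (fst p') /\ 0 < snd p' /\ snd p' <= hp (S k) /\
       forall z, dist_le z (fst p') (snd p') -> dist_le z (fst p) (snd p) /\ ~ C k z)).
  { intros k [y r]. destruct (classic (Y y /\ 0 < r)) as [[Hy Hr]|Hn]; [|exists (y, r); tauto].
    destruct (H k y (r / 2) Hy ltac:(lra)) as [y1 [Hy1 [Hd1 Hn1]]].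
    assert (Heps : exists eps, 0 < eps /\ forall c, C k c -> ~ dist_le y1 c eps).
    { apply NNPP. intro Hc. apply Hn1. apply Hcl; auto. intros e He. apply NNPP. intro Hc2. apply Hc.
      exists e. split; auto. intros c Hcc Hdc. apply Hc2. exists c; auto. }
    destruct Heps as [eps [Heps Hceps]].
    exists (y1, Rmin (eps / 2) (Rmin (r / 2) (hp (S k)))). simpl. intros _.
    pose proof (hp_pos (S k)).
    assert (Hm1 := Rmin_l (eps / 2) (Rmin (r / 2) (hp (S k)))). assert (Hm2 := Rmin_r (eps / 2) (Rmin (r / 2) (hp (S k)))).
    assert (Hm3 := Rmin_l (r / 2) (hp (S k))). assert (Hm4 := Rmin_r (r / 2) (hp (S k))).
    split; [auto|]. split; [apply Rmin_pos; [lra| apply Rmin_pos; lra]|]. split; [lra|].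
    intros zz Hz. split.
    - eapply dist_le_mono. eapply dist_le_tri; [exact Hz| exact Hd1]. lra.
    - intros Hcz. apply (Hceps zz Hcz). apply dist_le_sym. eapply dist_le_mono; [exact Hz| lra]. }
  destruct (choice (fun k => _) (fun k => choice _ (Hstep k))) as [F HF].
  assert (Hinv : forall k, Y (fst (bseq F k)) /\ 0 < snd (bseq F k) /\ snd (bseq F k) <= hp k).
  { induction k; simpl. split; [apply cs_zero; auto|]. unfold hp; simpl; lra.
    destruct IHk as [A [B _]]. destruct (HF k (bseq F k) (conj A B)) as [C1 [C2 [C3 _]]]. auto. }
  assert (Hnest : forall j m, (j <= m)%nat -> forall z, dist_le z (fst (bseq F m)) (snd (bseq F m)) -> dist_le z (fst (bseq F j)) (snd (bseq F j))).
  { intros j m Hjm. induction Hjm; auto. intros z Hz. apply IHHjm. destruct (Hinv m) as [A [B _]].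
    destruct (HF m (bseq F m) (conj A B)) as [_ [_ [_ Hb]]]. apply Hb. exact Hz. }
  assert (Hcau : forall k, dist_le (fst (bseq F k)) (fst (bseq F (S k))) (1 * hp k)).
  { intros k. rewrite Rmult_1_l. apply dist_le_sym. eapply dist_le_mono.
    - apply (Hnest k (S k) ltac:(lia)). apply dist_le_mono with 0. apply dist_le_refl. apply Rlt_le, Hinv.
    - apply Hinv. }
  destruct (complete_geom _ 1 Hcau) as [g [Hg Hgc]].
  assert (HgY : Y g).
  { apply (cs_closed Y HY). apply Hgc. intros k; apply (cs_cont Y HY), Hinv.
    intros e He. destruct (hp_small 2 e He) as [k Hk]. exists (fst (bseq F k)). split. apply Hinv.
    eapply dist_le_mono; [apply Hg| lra]. }
  destruct (Hcov g HgY) as [n Hn].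
  assert (Hgin : dist_le g (fst (bseq F (S n))) (snd (bseq F (S n)))).
  { apply dist_le_lim with 2. intros m. 
    eapply dist_le_mono. eapply dist_le_tri; [apply (Hg (Nat.max m (S n)))|].
    - apply (Hnest (S n) (Nat.max m (S n)) ltac:(lia)). apply dist_le_mono with 0. apply dist_le_refl. apply Rlt_le, Hinv.
    - assert (hp (Nat.max m (S n)) <= hp m) by (apply hp_le; lia). lra. }
  destruct (Hinv n) as [A [B _]].
  destruct (HF n (bseq F n) (conj A B)) as [_ [_ [_ Hb]]]. 
  destruct (Hb g Hgin) as [_ Hnc]. contradiction.
Qed.

Definition fadd (f g : Cantor -> R) : Cantor -> R := fun t => f t + g t.

Fixpoint resid (y : Cantor -> R) (G : nat -> (Cantor -> R) -> (Cantor -> R) * (Cantor -> R)) (k : nat) : Cantor -> R :=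
  match k with O => y | S k' => fun t => resid y G k' t - (fst (G k' (resid y G k')) t + snd (G k' (resid y G k')) t) end.
Fixpoint psZ y G k : Cantor -> R :=
  match k with O => zf | S k' => fun t => psZ y G k' t + fst (G k' (resid y G k')) t end.
Fixpoint psW y G k : Cantor -> R :=
  match k with O => zf | S k' => fun t => psW y G k' t + snd (G k' (resid y G k')) t end.

Lemma ps_id y G k t : y t = psZ y G k t + psW y G k t + resid y G k t.
Proof. induction k; simpl. unfold zf; ring. rewrite IHk. ring. Qed.

Lemma angle_exists (Y Z W : fset) : closed_subspace Y -> closed_subspace Z -> closed_subspace W ->
  (forall f, Z f -> Y f) -> (forall f, W f -> Y f) -> (forall f, Z f -> W f -> forall t, f t = 0) ->
  (forall y, Y y -> exists z w, Z z /\ W w /\ forall t, y t = z t + w t) ->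
  exists d, 0 < d /\ forall z w e, Z z -> W w -> dist_le (fadd z w) zf e -> dist_le z zf (e / d).
Proof.
  intros HY HZ HW HZY HWY HZW Hdec.
  set (C := fun (n : nat) (y : Cantor -> R) => Y y /\ forall eps, 0 < eps -> exists z w, Z z /\ W w /\ dist_le z zf (INR n) /\ dist_le y (fadd z w) eps).
  destruct (baire Y C HY) as [n [y0 [r [Hy0 [Hr Hball]]]]].
  { intros n y Hy Hc. split; auto. intros eps He. destruct (Hc (eps / 2) ltac:(lra)) as [c [[_ Hcc] Hd]].
    destruct (Hcc (eps / 2) ltac:(lra)) as [z [w [Hz [Hw [Hzn Hd2]]]]]. exists z, w. repeat split; auto.
    eapply dist_le_mono. eapply dist_le_tri; eauto. lra. }
  { intros y Hy. destruct (Hdec y Hy) as [z [w [Hz [Hw Hyzw]]]].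
    destruct (cont_bounded_pos z (cs_cont Z HZ z Hz)) as [M [HM HzM]].
    destruct (INR_archimed 1 M ltac:(lra)) as [n Hn]. exists n. split; auto. intros eps He. exists z, w. repeat split; auto.
    eapply dist_le_mono; [exact HzM| lra]. apply dist_le_mono with 0; [|lra]. intros t. rewrite Hyzw. unfold fadd. rewrite Rminus_diag, Rabs_R0; lra. }
  assert (Hc1 : forall y, Y y -> dist_le y zf r -> forall eps, 0 < eps -> exists z w, Z z /\ W w /\ dist_le z zf (2 * INR n) /\ dist_le y (fadd z w) eps).
  { intros y Hy Hyr eps He.
    destruct (Hball (fadd y0 y) (cs_add Y HY _ _ Hy0 Hy)) as [_ H1].
    { intros t. unfold fadd. replace (y0 t + y t - y0 t) with (y t - zf t) by (unfold zf; ring). apply Hyr. }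
    destruct (Hball y0 Hy0) as [_ H2]. { apply dist_le_mono with 0. apply dist_le_refl. lra. }
    destruct (H1 (eps / 2) ltac:(lra)) as [z1 [w1 [Hz1 [Hw1 [Hz1n Hd1]]]]].
    destruct (H2 (eps / 2) ltac:(lra)) as [z2 [w2 [Hz2 [Hw2 [Hz2n Hd2]]]]].
    exists (fun t => z1 t - z2 t), (fun t => w1 t - w2 t). split; [apply cs_sub; auto|]. split; [apply cs_sub; auto|].
    split.
    - intros t. assert (A := Hz1n t). assert (B := Hz2n t). unfold zf in *. rewrite Rminus_0_r in *.
      eapply Rle_trans; [apply Rabs_sub_le| lra].
    - intros t. assert (A := Hd1 t). assert (B := Hd2 t). unfold fadd in *.
      replace (y t - (z1 t - z2 t + (w1 t - w2 t))) with ((y0 t + y t - (z1 t + w1 t)) - (y0 t - (z2 t + w2 t))) by ring.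
      eapply Rle_trans; [apply Rabs_sub_le| lra]. }
  set (M := 2 * INR n / r).
  assert (HM : 0 <= M) by (unfold M; apply Rmult_le_pos; [pose proof (pos_INR n); lra| left; apply Rinv_0_lt_compat; auto]).
  assert (Hc2 : forall u e, Y u -> 0 < e -> dist_le u zf e -> forall eps, 0 < eps -> exists z w, Z z /\ W w /\ dist_le z zf (M * e) /\ dist_le u (fadd z w) eps).
  { intros u e Hu He Hue eps Heps.
    destruct (Hc1 (fun t => r / e * u t) (cs_scal Y HY _ _ Hu)) with (eps := eps * r / e) as [z [w [Hz [Hw [Hzn Hd]]]]].
    - apply (dist_le_ext (fun t => r / e * u t) _ (fun t => r / e * zf t) _); auto. intros; unfold zf; ring.
      eapply dist_le_mono. apply dist_le_scal, Hue. rewrite Rabs_pos_eq by (left; apply Rdiv_lt_0_compat; auto). right; field; lra.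
    - apply Rdiv_lt_0_compat; auto. apply Rmult_lt_0_compat; auto.
    - exists (fun t => e / r * z t), (fun t => e / r * w t). split; [apply cs_scal; auto|]. split; [apply cs_scal; auto|]. split.
      + apply (dist_le_ext (fun t => e / r * z t) _ (fun t => e / r * zf t) _); auto. intros; unfold zf; ring.
        eapply dist_le_mono. apply dist_le_scal, Hzn. rewrite Rabs_pos_eq by (left; apply Rdiv_lt_0_compat; auto). unfold M. right; field; lra.
      + apply (dist_le_ext (fun t => e / r * (r / e * u t)) _ (fun t => e / r * (fadd z w t)) _).
        * intros; field; lra.
        * intros; unfold fadd; ring.
        * eapply dist_le_mono. apply dist_le_scal, Hd. rewrite Rabs_pos_eq by (left; apply Rdiv_lt_0_compat; auto). right; field; lra. }
  exists (/ (2 * M + 1)). split. apply Rinv_0_lt_compat; lra.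
  assert (Hmain : forall z w e, Z z -> W w -> 0 < e -> dist_le (fadd z w) zf e -> dist_le z zf (2 * M * e)).
  { intros z w e Hz Hw He Hzw.
    set (y := fadd z w). assert (Hy : Y y) by (unfold y, fadd; apply cs_add; auto).
    assert (HG : forall k (u : Cantor -> R), exists p : (Cantor -> R) * (Cantor -> R),
       (Y u /\ dist_le u zf (e * hp k)) -> Z (fst p) /\ W (snd p) /\ dist_le (fst p) zf (M * (e * hp k)) /\ dist_le u (fadd (fst p) (snd p)) (e * hp (S k))).
    { intros k u. destruct (classic (Y u /\ dist_le u zf (e * hp k))) as [[Hu Hd]|Hn]; [|exists (zf, zf); tauto].
      destruct (Hc2 u (e * hp k) Hu ltac:(pose proof (hp_pos k); nra) Hd (e * hp (S k)) ltac:(pose proof (hp_pos (S k)); nra)) as [z' [w' H']].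
      exists (z', w'). simpl. intros _. exact H'. }
    destruct (choice (fun k => _) (fun k => choice _ (HG k))) as [G HGs].
    assert (Hinv : forall k, Y (resid y G k) /\ dist_le (resid y G k) zf (e * hp k)).
    { induction k; simpl. split; auto. unfold hp; simpl. rewrite Rmult_1_r; unfold y. exact Hzw.
      destruct (HGs k (resid y G k) IHk) as [A [B [_ D]]]. split.
      - apply (cs_sub Y HY (resid y G k) (fadd (fst (G k (resid y G k))) (snd (G k (resid y G k))))); [apply IHk| unfold fadd; apply (cs_add Y HY); auto].
      - apply dist_le_zf. intros t. assert (D1 := D t). unfold fadd in D1. exact D1. }
    assert (HGk : forall k, Z (fst (G k (resid y G k))) /\ W (snd (G k (resid y G k))) /\ dist_le (fst (G k (resid y G k))) zf (M * (e * hp k))).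
    { intros k. destruct (HGs k _ (Hinv k)) as [A [B [C1 _]]]. auto. }
    assert (HZs : forall k, Z (psZ y G k)).
    { induction k; simpl. apply cs_zero; auto. apply cs_add; auto. apply HGk. }
    assert (HWs : forall k, W (psW y G k)).
    { induction k; simpl. apply cs_zero; auto. apply cs_add; auto. apply HGk. }
    assert (Hcz : forall k, dist_le (psZ y G k) (psZ y G (S k)) ((M * e) * hp k)).
    { intros k t. simpl. replace (psZ y G k t - (psZ y G k t + fst (G k (resid y G k)) t)) with (- (fst (G k (resid y G k)) t - zf t)) by (unfold zf; ring).
      rewrite Rabs_Ropp. replace (M * e * hp k) with (M * (e * hp k)) by ring. apply HGk. }
    destruct (complete_geom _ _ Hcz) as [zs [Hzs Hzsc]].
    assert (Hzsc' : cont_cantor zs) by (apply Hzsc; intros; apply (cs_cont Z HZ), HZs).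
    assert (HzsZ : Z zs).
    { apply (cs_closed Z HZ); auto. intros eps Heps. destruct (hp_small (2 * M * e) eps Heps) as [k Hk].
      exists (psZ y G k). split; auto. eapply dist_le_mono; [apply Hzs| lra]. }
    assert (HwsW : W (fun t => y t - zs t)).
    { apply (cs_closed W HW). apply cont_minus; auto. apply (cs_cont Y HY); auto.
      intros eps Heps. destruct (hp_small (2 * M * e + e) eps Heps) as [k Hk].
      exists (psW y G k). split; auto. intros t. rewrite (ps_id y G k t).
      replace (psZ y G k t + psW y G k t + resid y G k t - zs t - psW y G k t) with (resid y G k t - (zs t - psZ y G k t)) by ring.
      eapply Rle_trans; [apply Rabs_sub_le|]. assert (A := proj2 (Hinv k) t). assert (B := Hzs k t). unfold zf in A. rewrite Rminus_0_r in A.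
      pose proof (hp_pos k). nra. }
    assert (Heq : forall t, z t - zs t = 0).
    { apply HZW. apply cs_sub; auto. apply cs_ext with (fun t => (y t - zs t) - w t). apply cs_sub; auto.
      intros t; unfold y, fadd; ring. }
    intros t. replace (z t - zf t) with (zs t - psZ y G 0 t) by (unfold zf; simpl; unfold zf; specialize (Heq t); lra).
    replace (2 * M * e) with (2 * (M * e) * hp 0) by (unfold hp; simpl; ring). apply (Hzs 0%nat t). }
  intros z w e Hz Hw Hd. assert (He0 : 0 <= e) by (eapply dist_le_nonneg; eauto).
  apply dist_le_lim with (2 * M + 1). intros k.
  eapply dist_le_mono. apply (Hmain z w (e + hp k)); auto. pose proof (hp_pos k); lra.
  eapply dist_le_mono; [exact Hd| pose proof (hp_pos k); lra].
  unfold Rdiv. rewrite Rinv_inv. pose proof (hp_pos k). nra.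
Qed.

Definition pad (n : nat) (a : nat -> R) : nat -> R := fun i => if Nat.ltb i n then a i else 0.

Lemma comb_pad n m a v : (n <= m)%nat -> forall t, comb m (pad n a) v t = comb n a v t.
Proof.
  intros H t. unfold comb. rewrite (fsum_pad n m). apply fsum_ext. intros i Hi. unfold pad. apply Nat.ltb_lt in Hi; rewrite Hi; auto.
  auto. intros i Hi. unfold pad. destruct (Nat.ltb_spec i n); [lia| ring].
Qed.

Lemma comb_plus n a b v t : comb n (fun i => a i + b i) v t = comb n a v t + comb n b v t.
Proof. unfold comb. rewrite <- fsum_plus. apply fsum_ext. intros; ring. Qed.

Lemma comb_scal n c a v t : comb n (fun i => c * a i) v t = c * comb n a v t.
Proof. unfold comb. rewrite <- fsum_scal. apply fsum_ext. intros; ring. Qed.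

Lemma comb_zero0 a v t : comb 0 a v t = 0.
Proof. reflexivity. Qed.

Definition unitv (j : nat) : nat -> R := fun i => if Nat.eqb i j then 1 else 0.

Lemma comb_unit j v t : comb (S j) (unitv j) v t = v j t.
Proof.
  unfold comb. simpl. unfold unitv at 2. rewrite Nat.eqb_refl.
  rewrite (fsum_ext j _ (fun _ => 0)). rewrite fsum_zero. ring.
  intros i Hi. unfold unitv. destruct (Nat.eqb_spec i j); [lia| ring].
Qed.

Lemma comb_in X n a v : closed_subspace X -> (forall i, (i < n)%nat -> X (v i)) -> X (comb n a v).
Proof.
  intros HX. induction n; intros Hv.
  - apply cs_ext with zf; [apply cs_zero; auto| reflexivity].
  - apply cs_ext with (fun t => comb n a v t + a n * v n t).
    apply (cs_add X HX (comb n a v) (fun t => a n * v n t)). apply IHn; intros; apply Hv; lia. apply cs_scal; auto.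
    intros t; reflexivity.
Qed.

Definition span_cl (v : nat -> Cantor -> R) : fset :=
  fun f => cont_cantor f /\ forall eps, 0 < eps -> exists n a, dist_le f (comb n a v) eps.

Lemma span_cl_cs v : (forall j, cont_cantor (v j)) -> closed_subspace (span_cl v).
Proof.
  intros Hv. split; [|split; [|split; [|split]]].
  - intros f [H _]; exact H.
  - split. apply cont_const. intros eps He. exists O, (fun _ => 0). apply dist_le_mono with 0; [|lra].
    intros t; unfold comb; simpl. rewrite Rminus_diag, Rabs_R0; lra.
  - intros f g [Hf Hfa] [Hg Hga]. split. apply cont_plus; auto.
    intros eps He. destruct (Hfa (eps/2) ltac:(lra)) as [n1 [a1 H1]]. destruct (Hga (eps/2) ltac:(lra)) as [n2 [a2 H2]].
    exists (Nat.max n1 n2), (fun i => pad n1 a1 i + pad n2 a2 i).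
    apply (dist_le_ext (fun t => f t + g t) _ (fun t => comb n1 a1 v t + comb n2 a2 v t) _); auto.
    + intros t. rewrite comb_plus, !comb_pad by lia. auto.
    + eapply dist_le_mono; [apply dist_le_plus; eauto| lra].
  - intros c f [Hf Hfa]. split. apply cont_scal; auto.
    intros eps He. destruct (Hfa (eps / (Rabs c + 1))) as [n [a H]].
    { apply Rdiv_lt_0_compat; auto. pose proof (Rabs_pos c); lra. }
    exists n, (fun i => c * a i).
    apply (dist_le_ext (fun t => c * f t) _ (fun t => c * comb n a v t) _); auto.
    + intros t. rewrite comb_scal; auto.
    + eapply dist_le_mono; [apply dist_le_scal; eauto|]. pose proof (Rabs_pos c).
      apply Rmult_le_reg_r with (Rabs c + 1); [lra|].
      replace (Rabs c * (eps / (Rabs c + 1)) * (Rabs c + 1)) with (Rabs c * eps) by (field; lra). nra.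
  - intros f Hf Happ. split; auto. intros eps He. destruct (Happ (eps/2) ltac:(lra)) as [g [[_ Hg] Hfg]].
    destruct (Hg (eps/2) ltac:(lra)) as [n [a H]]. exists n, a. eapply dist_le_mono; [eapply dist_le_tri; eauto| lra].
Qed.

Lemma span_cl_gen v j : (forall j, cont_cantor (v j)) -> span_cl v (v j).
Proof.
  intros Hv. split; auto. intros eps He. exists (S j), (unitv j). apply dist_le_mono with 0; [|lra].
  intros t. rewrite comb_unit, Rminus_diag, Rabs_R0. lra.
Qed.

Lemma span_cl_sub X v : closed_subspace X -> (forall j, X (v j)) -> forall f, span_cl v f -> X f.
Proof.
  intros HX Hv f [Hf Ha]. apply (cs_closed X HX); auto. intros e He. destruct (Ha e He) as [n [a H]].
  exists (comb n a v). split; auto. apply comb_in; auto.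
Qed.

Definition bix (n i : nat) : nat := Cantor.to_nat (n, i).

Definition sumsp (Z W : fset) : fset := fun f => exists g h, Z g /\ W h /\ forall t, f t = g t + h t.

Lemma build_decomp (X : fset) (z w : nat -> Cantor -> R) (K : R) :
  SB X -> 0 <= K -> (forall j, X (z j)) -> (forall j, X (w j)) ->
  (forall n, lin_indep n (fun i => z (bix n i))) -> (forall n, lin_indep n (fun i => w (bix n i))) ->
  (forall n a b e, dist_le (fadd (comb n a z) (comb n b w)) zf e -> dist_le (comb n a z) zf (e * K)) ->
  ~ hered_indec X.
Proof.
  intros HX HK Hz Hw Hlz Hlw Hang [_ Hhi].
  assert (Hzc : forall j, cont_cantor (z j)) by (intros j; apply (cs_cont X HX), Hz).
  assert (Hwc : forall j, cont_cantor (w j)) by (intros j; apply (cs_cont X HX), Hw).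
  set (Z := span_cl z). set (W := span_cl w).
  assert (HZ : closed_subspace Z) by (apply span_cl_cs; auto).
  assert (HW : closed_subspace W) by (apply span_cl_cs; auto).
  assert (Hang2 : forall g h e, Z g -> W h -> dist_le (fadd g h) zf e -> dist_le g zf (e * K)).
  { intros g h e [Hg Hga] [Hh Hha] Hd. apply dist_le_lim with (2 * K + 1). intros k.
    destruct (Hga (hp k) (hp_pos k)) as [n1 [a1 H1]]. destruct (Hha (hp k) (hp_pos k)) as [n2 [a2 H2]].
    set (n := Nat.max n1 n2).
    assert (A : dist_le (fadd (comb n (pad n1 a1) z) (comb n (pad n2 a2) w)) zf (e + 2 * hp k)).
    { intros t. assert (B1 := H1 t). assert (B2 := H2 t). assert (B3 := Hd t). unfold fadd, zf in *.
      rewrite !comb_pad by lia.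
      replace (comb n1 a1 z t + comb n2 a2 w t - 0) with ((g t + h t - 0) - (g t - comb n1 a1 z t) - (h t - comb n2 a2 w t)) by ring.
      eapply Rle_trans; [apply Rabs_sub_le|]. eapply Rle_trans; [apply Rplus_le_compat_r; apply Rabs_sub_le|]. lra. }
    assert (B := Hang _ _ _ _ A).
    intros t. assert (B1 := B t). assert (C1 := H1 t). unfold zf in *. rewrite comb_pad in B1 by lia.
    replace (g t - 0) with ((g t - comb n1 a1 z t) + (comb n1 a1 z t - 0)) by ring.
    eapply Rle_trans; [apply Rabs_triang|]. pose proof (hp_pos k). nra. }
  set (Y := sumsp Z W).
  assert (HY : closed_subspace Y).
  { split; [|split; [|split; [|split]]].
    - intros f [g [h [Hg [Hh Hf]]]]. apply cont_ext with (fun t => g t + h t); [intros; auto|].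
      apply cont_plus; [apply (cs_cont Z HZ)| apply (cs_cont W HW)]; auto.
    - exists zf, zf. split; [apply cs_zero; auto|]. split; [apply cs_zero; auto|]. intros; unfold zf; ring.
    - intros f1 f2 [g1 [h1 [Hg1 [Hh1 E1]]]] [g2 [h2 [Hg2 [Hh2 E2]]]].
      exists (fun t => g1 t + g2 t), (fun t => h1 t + h2 t). split; [apply cs_add; auto|]. split; [apply cs_add; auto|].
      intros t; rewrite E1, E2; ring.
    - intros c f [g [h [Hg [Hh E]]]]. exists (fun t => c * g t), (fun t => c * h t). split; [apply cs_scal; auto|]. split; [apply cs_scal; auto|].
      intros t; rewrite E; ring.
    - intros f Hf Happ.
      assert (Hk : forall k, exists p : (Cantor -> R) * (Cantor -> R), Z (fst p) /\ W (snd p) /\ dist_le f (fadd (fst p) (snd p)) (hp (S k))).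
      { intros k. destruct (Happ (hp (S k)) (hp_pos (S k))) as [y [[g [h [Hg [Hh E]]]] Hd]].
        exists (g, h). simpl. split; [exact Hg|]. split; [exact Hh|]. apply (dist_le_ext f _ y _); auto. }
      destruct (choice _ Hk) as [ps Hps].
      assert (Hcau : forall k, dist_le (fst (ps k)) (fst (ps (S k))) (K * hp k)).
      { intros k. destruct (Hps k) as [A1 [B1 C1]]. destruct (Hps (S k)) as [A2 [B2 C2]].
        apply dist_le_diff. rewrite Rmult_comm.
        apply (Hang2 (fun t => fst (ps k) t - fst (ps (S k)) t) (fun t => snd (ps k) t - snd (ps (S k)) t)).
        apply cs_sub; auto. apply cs_sub; auto.
        intros t. assert (D1 := C1 t). assert (D2 := C2 t). unfold fadd, zf in *.
        replace (fst (ps k) t - fst (ps (S k)) t + (snd (ps k) t - snd (ps (S k)) t) - 0)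
          with ((f t - (fst (ps (S k)) t + snd (ps (S k)) t)) - (f t - (fst (ps k) t + snd (ps k) t))) by ring.
        eapply Rle_trans; [apply Rabs_sub_le|]. rewrite !hp_S in *. pose proof (hp_pos k). lra. }
      destruct (complete_geom _ _ Hcau) as [gs [Hgs Hgsc]].
      assert (Hgsc' : cont_cantor gs) by (apply Hgsc; intros k; apply (cs_cont Z HZ), Hps).
      assert (HgsZ : Z gs).
      { apply (cs_closed Z HZ); auto. intros eps He. destruct (hp_small (2 * K) eps He) as [k Hk'].
        exists (fst (ps k)). split. apply Hps. eapply dist_le_mono; [apply Hgs| lra]. }
      exists gs, (fun t => f t - gs t). split; auto. split; [|intros; ring].
      apply (cs_closed W HW). apply cont_minus; auto.
      intros eps He. destruct (hp_small (2 * K + 1) eps He) as [k Hk'].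
      exists (snd (ps k)). split. apply Hps. intros t. destruct (Hps k) as [_ [_ C1]]. assert (D1 := C1 t). assert (D2 := Hgs k t).
      unfold fadd in D1. replace (f t - gs t - snd (ps k) t) with ((f t - (fst (ps k) t + snd (ps k) t)) - (gs t - fst (ps k) t)) by ring.
      eapply Rle_trans; [apply Rabs_sub_le|]. rewrite hp_S in D1. pose proof (hp_pos k). nra. }
  apply (Hhi Y HY).
  - intros f [g [h [Hg [Hh E]]]]. apply cs_ext with (fun t => g t + h t); [|intros; auto].
    apply (cs_add X HX); [apply (span_cl_sub X z HX Hz g Hg) | apply (span_cl_sub X w HX Hw h Hh)].
  - exists Z, W. split; auto. split; auto. split; [|split; [|split; [|split; [|split]]]].
    + intros n. exists (fun i => z (bix n i)). split; auto. intros i Hi; apply span_cl_gen; auto.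
    + intros n. exists (fun i => w (bix n i)). split; auto. intros i Hi; apply span_cl_gen; auto.
    + intros f Hf. exists f, zf. split; auto. split; [apply cs_zero; auto|]. intros; unfold zf; ring.
    + intros f Hf. exists zf, f. split; [apply cs_zero; auto|]. split; auto. intros; unfold zf; ring.
    + intros f HfZ HfW t.
      assert (A := Hang2 f (fun t => -1 * f t) 0 HfZ (cs_scal W HW _ _ HfW)).
      assert (B : dist_le (fadd f (fun t => -1 * f t)) zf 0) by (intros s; unfold fadd, zf; replace (f s + -1 * f s - 0) with 0 by ring; rewrite Rabs_R0; lra).
      specialize (A B t). rewrite Rmult_0_l in A. unfold zf in A. rewrite Rminus_0_r in A.
      apply Rabs_eq_0. apply Rle_antisym; auto. apply Rabs_pos.
    + intros y Hy. exact Hy.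
Qed.

Definition cix (tag j k : nat) : nat := Cantor.to_nat (Cantor.to_nat (tag, j), k).
Definition ap (y : Baire) (tag j k : nat) : Cantor -> R := DD (y (cix tag j k)).

Definition Valid (y : Baire) : Prop := forall tag j k, dist_le (ap y tag j k) (ap y tag j (S k)) (hp k).
Definition Xmem (X : fset) (y : Baire) : Prop := forall tag j k, meets (ball (ap y tag j k) (3 * hp k)) X.
Definition LBc (y : Baire) (tag : nat) : Prop :=
  forall n, exists q : nat, forall k c e, dist_le (comb n c (fun i => ap y tag (bix n i) k)) zf e ->
    forall i, (i < n)%nat -> Rabs (c i) / (INR q + 1) <= e + S1 n c * (2 * hp k).
Definition Ang (p : nat) (y : Baire) : Prop :=
  forall n k a b e, dist_le (fadd (comb n a (fun j => ap y 0 j k)) (comb n b (fun j => ap y 1 j k))) zf e ->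
    dist_le (comb n a (fun j => ap y 0 j k)) zf ((e + (S1 n a + S1 n b) * (2 * hp k)) * (INR p + 1) + S1 n a * (2 * hp k)).
Definition B2 (p : nat) (X : fset) (y : Baire) : Prop := Valid y /\ Xmem X y /\ LBc y 0 /\ LBc y 1 /\ Ang p y.

Lemma comb_ap_ext n c tag g k (y y' : Baire) :
  (forall i, (i < n)%nat -> y (cix tag (g i) k) = y' (cix tag (g i) k)) ->
  comb n c (fun i => ap y tag (g i) k) = comb n c (fun i => ap y' tag (g i) k).
Proof.
  intros H. apply functional_extensionality. intros t. unfold comb. apply fsum_ext. intros i Hi. unfold ap. rewrite H; auto.
Qed.

Definition Lst (tag : nat) (g : nat -> nat) (n k : nat) : list nat := map (fun i => cix tag (g i) k) (seq 0 n).

Lemma Lst_in tag g n k i : (i < n)%nat -> In (cix tag (g i) k) (Lst tag g n k).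
Proof. intros H. unfold Lst. apply (in_map (fun i => cix tag (g i) k)). apply in_seq. lia. Qed.

Lemma Valid_borel : sigma_gen baire_gen Valid.
Proof.
  apply sg_ext with (A := fun y => forall tag j k, dist_le (ap y tag j k) (ap y tag j (S k)) (hp k)); [|intros; reflexivity].
  apply sg_cap; intro tag. apply sg_cap; intro j. apply sg_cap; intro k.
  apply finitary_list with (L := cix tag j k :: cix tag j (S k) :: nil).
  intros y y' H. unfold ap. rewrite (H (cix tag j k)), (H (cix tag j (S k))); simpl; auto. reflexivity.
Qed.

Lemma Xmem_borel : sigma_gen prod_gen (fun p => Xmem (fst p) (snd p)).
Proof.
  apply sg_ext with (A := fun p => forall tag j k, exists m, meets (ball (DD m) (3 * hp k)) (fst p) /\ snd p (cix tag j k) = m).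
  - apply sg_cap; intro tag. apply sg_cap; intro j. apply sg_cap; intro k. apply sg_cup; intro m.
    apply (prod_rect (meets (ball (DD m) (3 * hp k))) (fun y => y (cix tag j k) = m)).
    + apply meets_ball_borel.
    + apply finitary_list with (L := cix tag j k :: nil). intros y y' H. rewrite (H (cix tag j k)); simpl; auto. reflexivity.
  - intros [X y]. unfold Xmem, ap. simpl. split.
    + intros H tag j k. destruct (H tag j k) as [m [Hm E]]. rewrite E. exact Hm.
    + intros H tag j k. exists (y (cix tag j k)). auto.
Qed.

Lemma LBc_borel tag : sigma_gen baire_gen (fun y => LBc y tag).
Proof.
  unfold LBc. apply sg_cap; intro n. apply sg_cup; intro q. apply sg_cap; intro k.
  apply finitary_list with (L := Lst tag (bix n) n k).
  intros y y' H. cbv beta.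
  assert (E : forall c, comb n c (fun i => ap y tag (bix n i) k) = comb n c (fun i => ap y' tag (bix n i) k)).
  { intros c. apply comb_ap_ext. intros i Hi. apply H, Lst_in; auto. }
  split; intros Hy c e; [rewrite <- E| rewrite E]; apply Hy.
Qed.

Lemma Ang_borel p : sigma_gen baire_gen (Ang p).
Proof.
  apply sg_ext with (A := fun y => forall n k, forall a b e, dist_le (fadd (comb n a (fun j => ap y 0 j k)) (comb n b (fun j => ap y 1 j k))) zf e ->
    dist_le (comb n a (fun j => ap y 0 j k)) zf ((e + (S1 n a + S1 n b) * (2 * hp k)) * (INR p + 1) + S1 n a * (2 * hp k))); [|intros; reflexivity].
  apply sg_cap; intro n. apply sg_cap; intro k.
  apply finitary_list with (L := Lst 0 (fun j => j) n k ++ Lst 1 (fun j => j) n k).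
  intros y y' H.
  assert (E0 : forall a, comb n a (fun j => ap y 0 j k) = comb n a (fun j => ap y' 0 j k)).
  { intros a. apply (comb_ap_ext n a 0 (fun j => j) k y y'). intros i Hi. apply H. apply in_or_app. left. apply (Lst_in 0 (fun j => j)); auto. }
  assert (E1 : forall a, comb n a (fun j => ap y 1 j k) = comb n a (fun j => ap y' 1 j k)).
  { intros a. apply (comb_ap_ext n a 1 (fun j => j) k y y'). intros i Hi. apply H. apply in_or_app. right. apply (Lst_in 1 (fun j => j)); auto. }
  split; intros Hy a b e; [rewrite <- !E0, <- !E1| rewrite !E0, !E1]; apply Hy.
Qed.

Lemma B2_borel p : sigma_gen prod_gen (fun q => B2 p (fst q) (snd q)).
Proof.
  unfold B2. apply sg_and. apply prod_right, Valid_borel.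
  apply sg_and. apply Xmem_borel.
  apply sg_and. apply (prod_right (fun y => LBc y 0)), LBc_borel.
  apply sg_and. apply (prod_right (fun y => LBc y 1)), LBc_borel.
  apply prod_right, Ang_borel.
Qed.

Lemma backward p X y : SB X -> B2 p X y -> ~ hered_indec X.
Proof.
  intros HX [HV [HXm [HL0 [HL1 HA]]]].
  assert (Hv : forall tj : nat * nat, exists g, (forall k, dist_le g (ap y (fst tj) (snd tj) k) (2 * 1 * hp k)) /\ cont_cantor g).
  { intros [tag j]. destruct (complete_geom (fun k => ap y tag j k) 1) as [g [Hg Hgc]].
    - intros k. rewrite Rmult_1_l. apply HV.
    - exists g. split; auto. apply Hgc. intros k; apply DD_cont. }
  destruct (choice _ Hv) as [vec Hvec].
  assert (Hap : forall tag j k, dist_le (vec (tag, j)) (ap y tag j k) (2 * hp k)).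
  { intros tag j k. replace (2 * hp k) with (2 * 1 * hp k) by ring. apply (proj1 (Hvec (tag, j))). }
  assert (HvX : forall tag j, X (vec (tag, j))).
  { intros tag j. apply (cs_closed X HX). apply (Hvec (tag, j)).
    intros eps He. destruct (hp_small 5 eps He) as [k Hk]. destruct (HXm tag j k) as [x [Hx [_ [r' [Hr' Hd]]]]].
    exists x. split; auto. eapply dist_le_mono; [eapply dist_le_tri; [apply Hap| exact Hd]|]. pose proof (hp_pos k). lra. }
  assert (Hcomb : forall n c tag g k, dist_le (comb n c (fun i => vec (tag, g i))) (comb n c (fun i => ap y tag (g i) k)) (S1 n c * (2 * hp k))).
  { intros n c tag g k. apply comb_perturb. intros i Hi. apply Hap. }
  assert (HLI : forall tag, LBc y tag -> forall n, lin_indep n (fun i => vec (tag, bix n i))).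
  { intros tag HL n c Hc i Hi. destruct (HL n) as [q Hq].
    assert (Hq' : Rabs (c i) / (INR q + 1) <= 0).
    { apply le_hp_lim with (4 * S1 n c). intros k.
      assert (A : dist_le (comb n c (fun i => ap y tag (bix n i) k)) zf (S1 n c * (2 * hp k) + 0)).
      { eapply dist_le_tri; [apply dist_le_sym, Hcomb|]. intros t. unfold comb, zf. rewrite Hc, Rminus_0_r, Rabs_R0. lra. }
      assert (B := Hq k c _ A i Hi). lra. }
    assert (0 < INR q + 1) by (pose proof (pos_INR q); lra).
    assert (Rabs (c i) <= 0).
    { apply Rmult_le_reg_r with (/ (INR q + 1)). apply Rinv_0_lt_compat; auto. rewrite Rmult_0_l. exact Hq'. }
    apply Rabs_eq_0. apply Rle_antisym; auto. apply Rabs_pos. }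
  apply (build_decomp X (fun j => vec (0%nat, j)) (fun j => vec (1%nat, j)) (INR p + 1) HX).
  - pose proof (pos_INR p); lra.
  - intros; apply HvX.
  - intros; apply HvX.
  - apply HLI; auto.
  - apply HLI; auto.
  - intros n a b e Hd. apply dist_le_lim with (4 * (S1 n a + S1 n b) * (INR p + 1) + 4 * S1 n a). intros k.
    assert (A : dist_le (fadd (comb n a (fun j => ap y 0 j k)) (comb n b (fun j => ap y 1 j k))) zf (e + (S1 n a + S1 n b) * (2 * hp k))).
    { eapply dist_le_mono. eapply dist_le_tri; [apply dist_le_sym, dist_le_plus; [apply (Hcomb n a 0%nat (fun j => j) k)| apply (Hcomb n b 1%nat (fun j => j) k)]| exact Hd].
      lra. }
    assert (B := HA n k a b _ A).
    eapply dist_le_mono. eapply dist_le_tri; [apply (Hcomb n a 0%nat (fun j => j) k)| exact B].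
    pose proof (hp_pos k). pose proof (pos_INR p). pose proof (S1_nonneg n a). pose proof (S1_nonneg n b). nra.
Qed.

Lemma lin_indep_ext n u v : (forall i, (i < n)%nat -> u i = v i) -> lin_indep n u -> lin_indep n v.
Proof.
  intros E H c Hc. apply H. intros t. rewrite <- (Hc t). apply fsum_ext. intros i Hi. rewrite E; auto.
Qed.

Lemma hp_S_le k : hp (S k) <= 2 * hp k.
Proof. rewrite hp_S. pose proof (hp_pos k). lra. Qed.

Lemma LBc_from (yy : Baire) tag (v : nat -> Cantor -> R) :
  (forall j, cont_cantor (v j)) -> (forall n, lin_indep n (fun i => v (bix n i))) ->
  (forall j k, dist_le (v j) (ap yy tag j k) (hp (S k))) -> LBc yy tag.
Proof.
  intros Hc Hli Hd n. destruct (LB n (fun i => v (bix n i)) (fun i _ => Hc _) (Hli n)) as [m [Hm HLB]].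
  destruct (INR_archimed 1 (/ m) ltac:(lra)) as [q Hq]. exists q. intros k c e He i Hi.
  assert (A : dist_le (comb n c (fun i => v (bix n i))) zf (S1 n c * hp (S k) + e)).
  { eapply dist_le_tri; [|exact He]. apply comb_perturb. intros; apply Hd. }
  assert (B := HLB c _ A i Hi).
  assert (Hq1 : 0 < INR q + 1) by (pose proof (pos_INR q); lra).
  assert (Hle : / (INR q + 1) <= m).
  { rewrite Rmult_1_r in Hq. apply Rmult_le_reg_l with (INR q + 1); auto. rewrite Rinv_r by lra.
    apply Rmult_le_reg_l with (/ m). apply Rinv_0_lt_compat; auto.
    replace (/ m * ((INR q + 1) * m)) with (INR q + 1) by (field; lra). lra. }
  unfold Rdiv. rewrite Rmult_comm. pose proof (Rabs_pos (c i)). pose proof (S1_nonneg n c). pose proof (hp_S_le k).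
  assert (/ (INR q + 1) * Rabs (c i) <= m * Rabs (c i)) by (apply Rmult_le_compat_r; auto).
  nra.
Qed.

Lemma forward X Y : SB X -> closed_subspace Y -> (forall f, Y f -> X f) -> decomposable Y ->
  exists p yy, B2 p X yy.
Proof.
  intros HX HY HYX [Z [W [HZ [HW [HZi [HWi [HZY [HWY [HZW Hdec]]]]]]]]].
  destruct (angle_exists Y Z W HY HZ HW HZY HWY HZW Hdec) as [d [Hd Hang]].
  destruct (INR_archimed 1 (/ d) ltac:(lra)) as [p Hp]. rewrite Rmult_1_r in Hp.
  destruct (choice _ HZi) as [vZ HvZ]. destruct (choice _ HWi) as [vW HvW].
  set (zv := fun j => if Nat.ltb (snd (Cantor.of_nat j)) (fst (Cantor.of_nat j)) then vZ (fst (Cantor.of_nat j)) (snd (Cantor.of_nat j)) else zf).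
  set (wv := fun j => if Nat.ltb (snd (Cantor.of_nat j)) (fst (Cantor.of_nat j)) then vW (fst (Cantor.of_nat j)) (snd (Cantor.of_nat j)) else zf).
  assert (EZ : forall n i, (i < n)%nat -> zv (bix n i) = vZ n i).
  { intros n i Hi. unfold zv, bix. rewrite Cantor.cancel_of_to. simpl. apply Nat.ltb_lt in Hi. rewrite Hi. auto. }
  assert (EW : forall n i, (i < n)%nat -> wv (bix n i) = vW n i).
  { intros n i Hi. unfold wv, bix. rewrite Cantor.cancel_of_to. simpl. apply Nat.ltb_lt in Hi. rewrite Hi. auto. }
  assert (HzZ : forall j, Z (zv j)).
  { intros j. unfold zv. destruct (Nat.ltb_spec (snd (Cantor.of_nat j)) (fst (Cantor.of_nat j))). apply HvZ; auto. apply cs_zero; auto. }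
  assert (HwW : forall j, W (wv j)).
  { intros j. unfold wv. destruct (Nat.ltb_spec (snd (Cantor.of_nat j)) (fst (Cantor.of_nat j))). apply HvW; auto. apply cs_zero; auto. }
  set (vec := fun tag j => match tag with O => zv j | _ => wv j end).
  assert (HvecX : forall tag j, X (vec tag j)).
  { intros [|tag] j; simpl; apply HYX; [apply HZY| apply HWY]; auto. }
  assert (Hvc : forall tag j, cont_cantor (vec tag j)) by (intros; apply (cs_cont X HX); auto).
  assert (Hch : forall m, exists idx, dist_le (vec (fst (Cantor.of_nat (fst (Cantor.of_nat m)))) (snd (Cantor.of_nat (fst (Cantor.of_nat m))))) (DD idx) (hp (S (snd (Cantor.of_nat m))))).
  { intros m. apply DD_dense. apply Hvc. apply hp_pos. }
  destruct (choice _ Hch) as [yy Hyy].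
  assert (Hap : forall tag j k, dist_le (vec tag j) (ap yy tag j k) (hp (S k))).
  { intros tag j k. unfold ap, cix. specialize (Hyy (Cantor.to_nat (Cantor.to_nat (tag, j), k))). rewrite Cantor.cancel_of_to in Hyy. cbn [fst snd] in Hyy. rewrite Cantor.cancel_of_to in Hyy. cbn [fst snd] in Hyy. exact Hyy. }
  exists p, yy. split; [|split; [|split; [|split]]].
  - intros tag j k. eapply dist_le_mono. eapply dist_le_tri; [apply dist_le_sym, Hap| apply Hap].
    rewrite !hp_S. pose proof (hp_pos k). lra.
  - intros tag j k. exists (vec tag j). split; auto. split; auto. exists (hp (S k)). split.
    rewrite hp_S. pose proof (hp_pos k). lra. apply dist_le_sym, Hap.
  - apply (LBc_from yy 0 zv). intros j; apply (Hvc 0%nat). intros n. apply lin_indep_ext with (vZ n). intros i Hi; rewrite EZ; auto. apply HvZ.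
    intros j k. apply (Hap 0%nat).
  - apply (LBc_from yy 1 wv). intros j; apply (Hvc 1%nat). intros n. apply lin_indep_ext with (vW n). intros i Hi; rewrite EW; auto. apply HvW.
    intros j k. apply (Hap 1%nat).
  - intros n k a b e He.
    assert (A : dist_le (fadd (comb n a zv) (comb n b wv)) zf ((S1 n a * hp (S k) + S1 n b * hp (S k)) + e)).
    { eapply dist_le_tri; [|exact He]. apply dist_le_plus; apply comb_perturb; intros; [apply (Hap 0%nat)| apply (Hap 1%nat)]. }
    assert (B := Hang _ _ _ (comb_in Z n a zv HZ (fun i _ => HzZ i)) (comb_in W n b wv HW (fun i _ => HwW i)) A).
    assert (C : dist_le (comb n a (fun j => ap yy 0 j k)) zf (S1 n a * hp (S k) + (S1 n a * hp (S k) + S1 n b * hp (S k) + e) / d)).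
    { eapply dist_le_tri; [|exact B]. apply dist_le_sym, comb_perturb. intros; apply (Hap 0%nat). }
    eapply dist_le_mono; [exact C|].
    assert (He0 : 0 <= e) by (eapply dist_le_nonneg; eauto).
    pose proof (hp_S_le k). pose proof (hp_pos (S k)). pose proof (S1_nonneg n a). pose proof (S1_nonneg n b).
    set (E := S1 n a * hp (S k) + S1 n b * hp (S k) + e).
    assert (HE : 0 <= E) by (unfold E; nra).
    assert (E / d <= E * (INR p + 1)).
    { unfold Rdiv. apply Rmult_le_compat_l; auto. lra. }
    assert (E <= e + (S1 n a + S1 n b) * (2 * hp k)) by (unfold E; nra).
    assert (E * (INR p + 1) <= (e + (S1 n a + S1 n b) * (2 * hp k)) * (INR p + 1)).
    { apply Rmult_le_compat_r; auto. pose proof (pos_INR p); lra. }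
    nra.
Qed.

Definition Bset (q : fset * Baire) : Prop :=
  (exists N, ~ FN N (fst q)) \/ exists p, B2 p (fst q) (snd q).

Lemma Bset_borel : sigma_gen prod_gen Bset.
Proof.
  unfold Bset. apply sg_or.
  - apply (prod_left (fun X => exists N, ~ FN N X)). apply sg_cup; intro N. apply sg_compl, FN_borel.
  - apply sg_cup; intro p. apply B2_borel.
Qed.

Theorem theorem5p10 : coanalytic_SB HI.
Proof.
  split.
  - intros X [H _]; exact H.
  - exists Bset. split; [apply Bset_borel|]. intros X. split.
    + intros [HX HnHI]. split; auto.
      assert (Hn : ~ hered_indec X) by (intros H; apply HnHI; split; auto).
      unfold hered_indec in Hn. apply not_and_or in Hn. destruct Hn as [Hn|Hn].
      * exists (fun _ => O). left. simpl. apply NNPP. intro Hc. apply Hn. intros N.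
        apply NNPP. intro HN. apply Hc. exists N. intro HF. apply HN. apply (FN_EN N X HX) in HF. exact HF.
      * apply not_all_ex_not in Hn. destruct Hn as [Y HY]. apply imply_to_and in HY. destruct HY as [HYc HY].
        apply imply_to_and in HY. destruct HY as [HYX HY]. apply NNPP in HY.
        destruct (forward X Y HX HYc HYX HY) as [p [yy Hyy]]. exists yy. right. exists p. exact Hyy.
    + intros [HX [yy [[N HN]|[p Hp]]]]; split; auto; intros [_ Hhi].
      * apply HN. apply (FN_EN N X HX). apply Hhi.
      * apply (backward p X yy HX Hp). exact Hhi.
Qed.
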